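(* Let $\vec f$ be a smooth closed plane curve parametrized by arc length with rotation number $n\ge1$. Then \[ I_0=\frac{16\pi^4}{L^3}\sum_{k\in\mathbb Z}k^3(k-n)|\hat f(k)|^2=\frac{16\pi^4}{L^3}\sum_{k\in\mathbb Z}k^2(k-n)^2|\hat f(k)|^2 . \] In particular $I_0\ge 0$, with equality if and only if the image of $\vec f$ is an $n$-fold circle.
   Context: A closed plane curve is a smooth map $\vec f:\mathbb{R}/L\mathbb{Z}\to\mathbb{R}^2$ parametrized by arc length $s$, where $L>0$ is its length. $\vec\tau=\partial_s\vec f$, $\vec\nu$ is $\vec\tau$ rotated counterclockwise by $\pi/2$, $\kappa=\partial_s^2\vec f\cdot\vec\nu$, and the rotation number is $n=\frac{1}{2\pi}\int_0^L\kappa\,ds$. Let $\tilde\kappa=\kappa-\frac1L\int_0^L\kappa\,ds$ and $I_0=L\int_0^L\tilde\kappa^2\,ds$. Identifying $\mathbb{R}^2$ with $\mathbb{C}$, $f=f_1+if_2$, and $\hat f(k)=L^{-1/2}\int_0^L f(s)e^{-2\pi i k s/L}\,ds$. An $n$-fold circle is the image of a map of the form $s\mapsto c+re^{2\pi i n (s+\sigma)/L}$ with $c\in\mathbb C$, $r>0$, $\sigma\in\mathbb R$. *)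

(* Defs.v *)
From Stdlib Require Import Reals Lra Lia ZArith ClassicalEpsilon.
Open Scope R_scope.

(** Riemann integral of g over [a,b]; the value is that of [RiemannInt]
    (independent of the integrability proof). Used only for continuous
    (smooth) integrands, which are Riemann integrable. *)
Definition Rint (g : R -> R) (a b : R) : R :=
  epsilon (inhabits 0%R)
    (fun I => exists pr : Riemann_integrable g a b, RiemannInt pr = I).

(** [D] is a tower of derivatives: D (S k) is the derivative of D k
    everywhere.  A function g is smooth iff g = D 0 for such a tower. *)
Definition deriv_tower (D : nat -> R -> R) : Prop :=
  forall (k : nat) (x : R), derivable_pt_lim (D k) x (D (S k) x).

(** Smooth closed plane curve f = (D1 0, D2 0), of length L, parametrized by
    arc length, with all derivatives D1 k, D2 k. *)
Definition arclength_closed_curve (D1 D2 : nat -> R -> R) (L : R) : Prop :=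
  0 < L /\ deriv_tower D1 /\ deriv_tower D2 /\
  (forall s, D1 0%nat (s + L) = D1 0%nat s /\ D2 0%nat (s + L) = D2 0%nat s) /\
  (forall s, (D1 1%nat s)^2 + (D2 1%nat s)^2 = 1).

(** curvature kappa = d^2 f/ds^2 . nu, with nu = tau rotated by +pi/2,
    tau = (f1', f2'), nu = (-f2', f1'). *)
Definition curvature (D1 D2 : nat -> R -> R) (s : R) : R :=
  - D1 2%nat s * D2 1%nat s + D2 2%nat s * D1 1%nat s.

Definition rotation_number (D1 D2 : nat -> R -> R) (L : R) : R :=
  / (2 * PI) * Rint (curvature D1 D2) 0 L.

Definition I0 (D1 D2 : nat -> R -> R) (L : R) : R :=
  let m := / L * Rint (curvature D1 D2) 0 L in
  L * Rint (fun s => (curvature D1 D2 s - m)^2) 0 L.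

(** Fourier coefficient hat f(k) = L^{-1/2} int_0^L f(s) e^{-2 pi i k s/L} ds,
    with f = f1 + i f2; we write out its real and imaginary parts. *)
Definition fhat_re (f1 f2 : R -> R) (L : R) (k : Z) : R :=
  / sqrt L * Rint (fun s => f1 s * cos (2 * PI * IZR k * s / L)
                          + f2 s * sin (2 * PI * IZR k * s / L)) 0 L.
Definition fhat_im (f1 f2 : R -> R) (L : R) (k : Z) : R :=
  / sqrt L * Rint (fun s => f2 s * cos (2 * PI * IZR k * s / L)
                          - f1 s * sin (2 * PI * IZR k * s / L)) 0 L.

Definition fhat_norm2 (f1 f2 : R -> R) (L : R) (k : Z) : R :=
  (fhat_re f1 f2 L k)^2 + (fhat_im f1 f2 L k)^2.

(** symmetric partial sums  sum_{k=-N}^{N} a k *)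
Definition sumZ_partial (a : Z -> R) (N : nat) : R :=
  sum_f_R0 (fun j => a (Z.of_nat j - Z.of_nat N)%Z) (2 * N).

Definition image_is_nfold_circle (f1 f2 : R -> R) (L : R) (n : Z) : Prop :=
  exists (c1 c2 r sigma : R), 0 < r /\
    forall x y : R,
      (exists s, f1 s = x /\ f2 s = y) <->
      (exists s, c1 + r * cos (2 * PI * IZR n * (s + sigma) / L) = x /\
                 c2 + r * sin (2 * PI * IZR n * (s + sigma) / L) = y).

(* Main.v *)
Require Import Defs.
From Stdlib Require Import Reals ZArith Lra Lia Psatz ClassicalEpsilon.
From Coquelicot Require Import Coquelicot.
Open Scope R_scope.

Notation "a =R b" := (@eq R a b) (at level 70, no associativity).

Lemma cont_plus (f g : R -> R) x : continuous f x -> continuous g x -> continuous (fun y => f y + g y) x.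
Proof. intros; apply (continuous_plus f g); auto. Qed.
Lemma cont_minus (f g : R -> R) x : continuous f x -> continuous g x -> continuous (fun y => f y - g y) x.
Proof. intros; apply (continuous_minus f g); auto. Qed.
Lemma cont_mult (f g : R -> R) x : continuous f x -> continuous g x -> continuous (fun y => f y * g y) x.
Proof. intros; apply (continuous_mult f g); auto. Qed.
Lemma cont_opp (f : R -> R) x : continuous f x -> continuous (fun y => - f y) x.
Proof. intros; apply (continuous_opp f); auto. Qed.
Lemma cont_const (c x : R) : continuous (fun _ : R => c) x.
Proof. apply continuous_const. Qed.
Lemma cont_id (x : R) : continuous (fun y : R => y) x.
Proof. apply continuous_id. Qed.
Lemma cont_cos (f : R -> R) x : continuous f x -> continuous (fun y => cos (f y)) x.
Proof. intros; apply continuous_cos_comp; auto. Qed.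
Lemma cont_sin (f : R -> R) x : continuous f x -> continuous (fun y => sin (f y)) x.
Proof. intros; apply continuous_sin_comp; auto. Qed.
Lemma cont_pow (f : R -> R) n x : continuous f x -> continuous (fun y => f y ^ n) x.
Proof. intros H; induction n; simpl. apply cont_const. apply cont_mult; auto. Qed.
Lemma cont_div (f : R -> R) c x : continuous f x -> continuous (fun y => f y / c) x.
Proof. intros; unfold Rdiv; apply cont_mult; auto; apply cont_const. Qed.
Lemma cont_abs (f : R -> R) x : continuous f x -> continuous (fun y => Rabs (f y)) x.
Proof. intros; apply (continuous_comp f Rabs); auto; apply continuous_Rabs. Qed.

Lemma cont_Rmult c x : continuous (Rmult c) x.
Proof. apply (cont_mult (fun _ => c) (fun y => y)); [apply cont_const|apply cont_id]. Qed.
Lemma cont_Rplus c x : continuous (Rplus c) x.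
Proof. apply (cont_plus (fun _ => c) (fun y => y)); [apply cont_const|apply cont_id]. Qed.

Definition contR (u : R -> R) := forall x, continuous u x.

Ltac cont_ext := fail.
Ltac cont := repeat match goal with
  | |- continuous (fun _ => ?c) _ => apply cont_const
  | |- continuous (fun y => y) _ => apply cont_id
  | |- continuous (Rmult _) _ => apply cont_Rmult
  | |- continuous (Rplus _) _ => apply cont_Rplus
  | |- continuous cos _ => apply continuous_cos
  | |- continuous sin _ => apply continuous_sin
  | |- continuous (fun y => _ + _) _ => apply cont_plus
  | |- continuous (fun y => _ - _) _ => apply cont_minus
  | |- continuous (fun y => _ * _) _ => apply cont_mult
  | |- continuous (fun y => _ / _) _ => apply cont_div
  | |- continuous (fun y => - _) _ => apply cont_opp
  | |- continuous (fun y => cos _) _ => apply cont_cos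
  | |- continuous (fun y => sin _) _ => apply cont_sin
  | |- continuous (fun y => _ ^ _) _ => apply cont_pow
  | |- continuous (fun y => Rabs _) _ => apply cont_abs
  | H : forall x, continuous ?u x |- continuous ?u _ => apply H
  | H : contR ?u |- continuous ?u _ => apply H
  | H : forall x, continuous ?u x |- continuous (fun y => ?u y) _ => apply H
  | H : contR ?u |- continuous (fun y => ?u y) _ => apply H
  | H : forall k : nat, contR (?D k) |- continuous (?D ?k) _ => apply (H k)
  | H : forall k : nat, contR (?D k) |- continuous (fun y => ?D ?k y) _ => apply (H k)
  | |- continuous _ _ => cont_ext
  end.

Ltac toR := match goal with |- ?a = ?b => change (@eq R a b) end.


Lemma deriv_cont (u du : R -> R) : (forall x, derivable_pt_lim u x (du x)) -> contR u.
Proof. intros H x; apply (ex_derive_continuous (K:=R_AbsRing) (V:=R_NormedModule)); exists (du x); apply is_derive_Reals; auto. Qed.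

Lemma Rint_RInt (g : R -> R) a b : a <= b -> contR g -> Rint g a b = RInt g a b.
Proof.
  intros Hab Hg.
  assert (Hex : ex_RInt g a b) by (apply (ex_RInt_continuous (V:=R_CompleteNormedModule)); intros; apply Hg).
  assert (Hr : Riemann_integrable g a b) by (apply ex_RInt_Reals_0; auto).
  unfold Rint.
  destruct (epsilon_spec (inhabits 0) (fun I => exists pr : Riemann_integrable g a b, RiemannInt pr = I))
    as [pr Hpr].
  { exists (RiemannInt Hr); exists Hr; reflexivity. }
  rewrite <- Hpr, RInt_Reals with (pr := pr); reflexivity.
Qed.

Lemma exR (g : R -> R) a b : contR g -> ex_RInt g a b.
Proof. intros; apply (ex_RInt_continuous (V:=R_CompleteNormedModule)); intros; auto. Qed.

Lemma RInt_plusR (f g : R -> R) a b : contR f -> contR g ->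
  RInt (fun x => f x + g x) a b =R RInt f a b + RInt g a b.
Proof. intros; apply (RInt_plus (V:=R_CompleteNormedModule) f g); apply exR; auto. Qed.
Lemma RInt_minusR (f g : R -> R) a b : contR f -> contR g ->
  RInt (fun x => f x - g x) a b =R RInt f a b - RInt g a b.
Proof. intros; apply (RInt_minus (V:=R_CompleteNormedModule) f g); apply exR; auto. Qed.
Lemma RInt_scalR (f : R -> R) c a b : contR f ->
  RInt (fun x => c * f x) a b =R c * RInt f a b.
Proof. intros; apply (RInt_scal (V:=R_CompleteNormedModule) f); apply exR; auto. Qed.
Lemma RInt_constR (c a b : R) : RInt (fun _ => c) a b =R (b - a) * c.
Proof. rewrite RInt_const; reflexivity. Qed.
Lemma RInt_extR (f g : R -> R) a b : (forall x, f x =R g x) -> RInt f a b =R RInt g a b.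
Proof. intros H; apply RInt_ext; intros; auto. Qed.
Lemma RInt_leR (f g : R -> R) a b : a <= b -> contR f -> contR g -> (forall x, a <= x <= b -> f x <= g x) ->
  RInt f a b <= RInt g a b.
Proof. intros; apply RInt_le; auto; try apply exR; auto. intros; apply H2; lra. Qed.
Lemma RInt_ge0 (f : R -> R) a b : a <= b -> contR f -> (forall x, a <= x <= b -> 0 <= f x) -> 0 <= RInt f a b.
Proof. intros. rewrite <- (Rmult_0_r (b - a)), <- RInt_constR. apply RInt_leR; auto.
 intro; apply cont_const. Qed.
Lemma abs_RInt_leR (f : R -> R) a b : a <= b -> contR f ->
  Rabs (RInt f a b) <= RInt (fun t => Rabs (f t)) a b.
Proof. intros; apply abs_RInt_le; auto; apply exR; auto. Qed.


Lemma RInt_deriv (F f : R -> R) a b : (forall x, is_derive F x (f x)) -> contR f ->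
  RInt f a b =R F b - F a.
Proof.
  intros HF Hf. apply is_RInt_unique.
  apply (is_RInt_derive (V:=R_CompleteNormedModule) F f); intros; auto.
Qed.

Lemma sin2piz z : sin (2*PI*IZR z) = 0.
Proof. apply sin_eq_0_1. exists (2*z)%Z. rewrite mult_IZR. simpl. lra. Qed.
Lemma cos2piz z : cos (2*PI*IZR z) = 1.
Proof. replace (2*PI*IZR z) with (2*(IZR z*PI)) by ring. rewrite cos_2a_sin.
  rewrite sin_eq_0_1 by (exists z; reflexivity). ring. Qed.

Lemma int_cos L z : 0 < L -> z <> 0%Z -> RInt (fun s => cos (2*PI*IZR z*s/L)) 0 L =R 0.
Proof.
  intros HL Hz. assert (HzR : IZR z <> 0) by (apply not_0_IZR; auto).
  assert (HP := PI_neq0).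
  rewrite (RInt_deriv (fun s => sin (2*PI*IZR z*s/L) * (L/(2*PI*IZR z)))).
  - replace (2*PI*IZR z*L/L) with (2*PI*IZR z) by (field; lra).
    rewrite sin2piz. replace (2*PI*IZR z*0/L) with 0 by (field; lra). rewrite sin_0. ring.
  - intros x. auto_derive; [repeat split; auto; lra | toR; unfold Rdiv; field; repeat split; auto; lra].
  - intro x; cont.
Qed.

Lemma int_sin L z : 0 < L -> RInt (fun s => sin (2*PI*IZR z*s/L)) 0 L =R 0.
Proof.
  intros HL. destruct (Z.eq_dec z 0) as [->|Hz].
  - rewrite (RInt_extR _ (fun _ => 0)). rewrite RInt_constR; ring.
    intro x. replace (2*PI*IZR 0*x/L) with 0 by (simpl; field; lra). apply sin_0.
  - assert (HzR : IZR z <> 0) by (apply not_0_IZR; auto).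
    assert (HP := PI_neq0).
    rewrite (RInt_deriv (fun s => - cos (2*PI*IZR z*s/L) * (L/(2*PI*IZR z)))).
    + replace (2*PI*IZR z*L/L) with (2*PI*IZR z) by (field; lra).
      rewrite cos2piz. replace (2*PI*IZR z*0/L) with 0 by (field; lra). rewrite cos_0. ring.
    + intros x. auto_derive; [repeat split; auto; lra | toR; unfold Rdiv; field; repeat split; auto; lra].
    + intro x; cont.
Qed.

Lemma int_cos_0 L : RInt (fun s => cos (2*PI*IZR 0*s/L)) 0 L =R L.
Proof. rewrite (RInt_extR _ (fun _ => 1)). rewrite RInt_constR; ring.
  intro x. simpl. rewrite Rmult_0_r, Rmult_0_l. unfold Rdiv. rewrite Rmult_0_l. apply cos_0. Qed.

Definition cz L (r s : R) := cos (2*PI*r*s/L).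
Definition sz L (r s : R) := sin (2*PI*r*s/L).

Lemma ccprod L j k s : cz L j s * cz L k s = (cz L (j - k) s + cz L (j + k) s)/2.
Proof. unfold cz. replace (2*PI*(j-k)*s/L) with (2*PI*j*s/L - 2*PI*k*s/L) by (unfold Rdiv; ring).
  replace (2*PI*(j+k)*s/L) with (2*PI*j*s/L + 2*PI*k*s/L) by (unfold Rdiv; ring).
  rewrite cos_minus, cos_plus. field. Qed.
Lemma ssprod L j k s : sz L j s * sz L k s = (cz L (j - k) s - cz L (j + k) s)/2.
Proof. unfold cz, sz. replace (2*PI*(j-k)*s/L) with (2*PI*j*s/L - 2*PI*k*s/L) by (unfold Rdiv; ring).
  replace (2*PI*(j+k)*s/L) with (2*PI*j*s/L + 2*PI*k*s/L) by (unfold Rdiv; ring).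
  rewrite cos_minus, cos_plus. field. Qed.
Lemma csprod L j k s : cz L j s * sz L k s = (sz L (j + k) s - sz L (j - k) s)/2.
Proof. unfold cz, sz. replace (2*PI*(j-k)*s/L) with (2*PI*j*s/L - 2*PI*k*s/L) by (unfold Rdiv; ring).
  replace (2*PI*(j+k)*s/L) with (2*PI*j*s/L + 2*PI*k*s/L) by (unfold Rdiv; ring).
  rewrite sin_minus, sin_plus. field. Qed.

Lemma cont_cz L r : contR (cz L r). Proof. intro; unfold cz; cont. Qed.
Lemma cont_sz L r : contR (sz L r). Proof. intro; unfold sz; cont. Qed.

Ltac cont_ext ::= match goal with
  | |- continuous (cz ?L ?r) _ => apply (cont_cz L r)
  | |- continuous (fun y => cz ?L ?r y) _ => apply (cont_cz L r)
  | |- continuous (sz ?L ?r) _ => apply (cont_sz L r)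
  | |- continuous (fun y => sz ?L ?r y) _ => apply (cont_sz L r)
  end.

Lemma int_cz L z : 0 < L -> RInt (cz L (IZR z)) 0 L =R if Z.eq_dec z 0 then L else 0.
Proof. intros HL. unfold cz. destruct (Z.eq_dec z 0) as [->|Hz]. apply int_cos_0. apply int_cos; auto. Qed.
Lemma int_sz L z : 0 < L -> RInt (sz L (IZR z)) 0 L =R 0.
Proof. intros; unfold sz; apply int_sin; auto. Qed.

Lemma orth_cc L j k : 0 < L -> (j <> k)%Z -> (j + k <> 0)%Z ->
  RInt (fun s => cz L (IZR j) s * cz L (IZR k) s) 0 L =R 0.
Proof. intros HL H1 H2. rewrite (RInt_extR _ (fun s => /2 * (cz L (IZR (j-k)) s + cz L (IZR (j+k)) s))).
  rewrite RInt_scalR, RInt_plusR, !int_cz; auto; try (intro; cont).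
  destruct (Z.eq_dec (j-k) 0); [lia|]. destruct (Z.eq_dec (j+k) 0); [lia|]. ring.
  intro s; rewrite ccprod, minus_IZR, plus_IZR; field. Qed.
Lemma orth_ss L j k : 0 < L -> (j <> k)%Z -> (j + k <> 0)%Z ->
  RInt (fun s => sz L (IZR j) s * sz L (IZR k) s) 0 L =R 0.
Proof. intros HL H1 H2. rewrite (RInt_extR _ (fun s => /2 * (cz L (IZR (j-k)) s - cz L (IZR (j+k)) s))).
  rewrite RInt_scalR, RInt_minusR, !int_cz; auto; try (intro; cont).
  destruct (Z.eq_dec (j-k) 0); [lia|]. destruct (Z.eq_dec (j+k) 0); [lia|]. ring.
  intro s; rewrite ssprod, minus_IZR, plus_IZR; field. Qed.
Lemma orth_cs L j k : 0 < L ->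
  RInt (fun s => cz L (IZR j) s * sz L (IZR k) s) 0 L =R 0.
Proof. intros HL. rewrite (RInt_extR _ (fun s => /2 * (sz L (IZR (j+k)) s - sz L (IZR (j-k)) s))).
  rewrite RInt_scalR, RInt_minusR, !int_sz; auto; try (intro; cont). ring.
  intro s; rewrite csprod, minus_IZR, plus_IZR; field. Qed.
Lemma norm_cc L k : 0 < L -> (k <> 0)%Z ->
  RInt (fun s => cz L (IZR k) s * cz L (IZR k) s) 0 L =R L/2.
Proof. intros HL H1. rewrite (RInt_extR _ (fun s => /2 * (cz L (IZR (k-k)) s + cz L (IZR (k+k)) s))).
  rewrite RInt_scalR, RInt_plusR, !int_cz; auto; try (intro; cont).
  destruct (Z.eq_dec (k-k) 0); [|lia]. destruct (Z.eq_dec (k+k) 0); [lia|]. field.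
  intro s; rewrite ccprod, minus_IZR, plus_IZR; field. Qed.
Lemma norm_ss L k : 0 < L -> (k <> 0)%Z ->
  RInt (fun s => sz L (IZR k) s * sz L (IZR k) s) 0 L =R L/2.
Proof. intros HL H1. rewrite (RInt_extR _ (fun s => /2 * (cz L (IZR (k-k)) s - cz L (IZR (k+k)) s))).
  rewrite RInt_scalR, RInt_minusR, !int_cz; auto; try (intro; cont).
  destruct (Z.eq_dec (k-k) 0); [|lia]. destruct (Z.eq_dec (k+k) 0); [lia|]. field.
  intro s; rewrite ssprod, minus_IZR, plus_IZR; field. Qed.


Fixpoint sm (f : nat -> R) (n : nat) : R := match n with O => 0 | S k => sm f k + f k end.

Lemma sm_ext f g n : (forall m, (m < n)%nat -> f m = g m) -> sm f n = sm g n.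
Proof. induction n; simpl; intros; auto. rewrite IHn, H; auto. Qed.
Lemma sm_plus f g n : sm (fun m => f m + g m) n = sm f n + sm g n.
Proof. induction n; simpl; [ring|rewrite IHn; ring]. Qed.
Lemma sm_scal c f n : sm (fun m => c * f m) n = c * sm f n.
Proof. induction n; simpl; [ring|rewrite IHn; ring]. Qed.
Lemma sm_mult_r f c n : sm f n * c = sm (fun m => f m * c) n.
Proof. induction n; simpl; [ring|rewrite <- IHn; ring]. Qed.
Lemma sm_zero n : sm (fun _ => 0) n = 0.
Proof. induction n; simpl; [reflexivity|rewrite IHn; ring]. Qed.
Lemma sm_ge0 f n : (forall m, 0 <= f m) -> 0 <= sm f n.
Proof. induction n; simpl; intros; [lra|]. specialize (IHn H). specialize (H n). lra. Qed.

Lemma cont_sm (F : nat -> R -> R) n : (forall m, contR (F m)) -> contR (fun x => sm (fun m => F m x) n).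
Proof. intros H; induction n; simpl; intro x. apply cont_const. apply cont_plus; auto. apply H. Qed.

Lemma RInt_sm (F : nat -> R -> R) n a b : (forall m, contR (F m)) ->
  RInt (fun x => sm (fun m => F m x) n) a b =R sm (fun m => RInt (F m) a b) n.
Proof. intros H; induction n; simpl.
  rewrite RInt_constR; ring.
  rewrite RInt_plusR; [rewrite IHn; auto| apply cont_sm; auto| apply H]. Qed.

Definition Cc L (u : R -> R) r : R := RInt (fun s => u s * cz L r s) 0 L.
Definition Sc L (u : R -> R) r : R := RInt (fun s => u s * sz L r s) 0 L.

Definition Fterm L (a b : nat -> R) m x := a m * cz L (INR m) x + b m * sz L (INR m) x.
Definition Pt L a b N x := sm (fun m => Fterm L a b m x) (S N).
Definition wt (m : nat) := match m with O => 1 | S _ => 2 end.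
Definition Qs L u N := sm (fun m => wt m * (Cc L u (INR m)^2 + Sc L u (INR m)^2)) (S N).
Definition rterm L u (a b : nat -> R) m := match m with
  | O => (Cc L u 0 - L * a O)^2
  | S _ => 2 * ((Cc L u (INR m) - L * a m / 2)^2 + (Sc L u (INR m) - L * b m / 2)^2) end.

Lemma cont_Fterm L a b m : contR (Fterm L a b m).
Proof. intro x; unfold Fterm; cont. Qed.
Lemma cont_Pt L a b N : contR (Pt L a b N).
Proof. unfold Pt. apply (cont_sm (Fterm L a b)). apply cont_Fterm. Qed.

Lemma RInt_lin4 (f g h k : R -> R) p q r w a b : contR f -> contR g -> contR h -> contR k ->
  RInt (fun x => p * f x + q * g x + r * h x + w * k x) a b =R
  p * RInt f a b + q * RInt g a b + r * RInt h a b + w * RInt k a b.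
Proof. intros. rewrite !RInt_plusR; try (intro; cont; fail).
  rewrite !RInt_scalR; auto. Qed.

Lemma Z_of_nat_neq j k : j <> k -> (Z.of_nat j <> Z.of_nat k)%Z.
Proof. lia. Qed.

Lemma orth_Fterm L a b m K c d : 0 < L -> (m < K)%nat ->
  RInt (fun x => Fterm L a b m x * (c * cz L (INR K) x + d * sz L (INR K) x)) 0 L =R 0.
Proof.
  intros HL HmK. rewrite !INR_IZR_INZ.
  rewrite (RInt_extR _ (fun x => (a m * c) * (cz L (IZR (Z.of_nat m)) x * cz L (IZR (Z.of_nat K)) x)
     + (a m * d) * (cz L (IZR (Z.of_nat m)) x * sz L (IZR (Z.of_nat K)) x)
     + (b m * c) * (cz L (IZR (Z.of_nat K)) x * sz L (IZR (Z.of_nat m)) x)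
     + (b m * d) * (sz L (IZR (Z.of_nat m)) x * sz L (IZR (Z.of_nat K)) x))).
  - rewrite RInt_lin4; try (intro; cont).
    rewrite orth_cc, orth_cs, orth_cs, orth_ss; auto; try lia. ring.
  - intro x; unfold Fterm; rewrite !INR_IZR_INZ; ring.
Qed.

Lemma int_sq_t L K c d : 0 < L -> (0 < K)%nat ->
  RInt (fun x => (c * cz L (INR K) x + d * sz L (INR K) x)^2) 0 L =R L/2 * (c^2 + d^2).
Proof.
  intros HL HK. rewrite !INR_IZR_INZ.
  rewrite (RInt_extR _ (fun x => c^2 * (cz L (IZR (Z.of_nat K)) x * cz L (IZR (Z.of_nat K)) x)
     + (2*c*d) * (cz L (IZR (Z.of_nat K)) x * sz L (IZR (Z.of_nat K)) x)
     + 0 * (cz L (IZR (Z.of_nat K)) x * sz L (IZR (Z.of_nat K)) x)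
     + d^2 * (sz L (IZR (Z.of_nat K)) x * sz L (IZR (Z.of_nat K)) x))).
  - rewrite RInt_lin4; try (intro; cont).
    rewrite norm_cc, orth_cs, norm_ss; auto; try lia. field.
  - intro x; ring.
Qed.

Lemma cz0 L x : cz L (INR 0) x = 1.
Proof. unfold cz; simpl. replace (2*PI*0*x/L) with 0 by (unfold Rdiv; ring). apply cos_0. Qed.
Lemma sz0 L x : sz L (INR 0) x = 0.
Proof. unfold sz; simpl. replace (2*PI*0*x/L) with 0 by (unfold Rdiv; ring). apply sin_0. Qed.

Lemma Sc0 L u : Sc L u 0 = 0.
Proof. unfold Sc. rewrite (RInt_extR _ (fun _ => 0)). rewrite RInt_constR; ring.
  intro x. replace (sz L 0 x) with (sz L (INR 0) x) by reflexivity. rewrite sz0; ring. Qed.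
Lemma Cc0 L u : Cc L u 0 = RInt u 0 L.
Proof. unfold Cc. apply RInt_extR. intro x. replace (cz L 0 x) with (cz L (INR 0) x) by reflexivity. rewrite cz0; ring. Qed.

Lemma Pt_S L a b N x : Pt L a b (S N) x = Pt L a b N x + Fterm L a b (S N) x.
Proof. reflexivity. Qed.

Lemma best_approx L u a b N : 0 < L -> contR u ->
  L * RInt (fun x => (u x - Pt L a b N x)^2) 0 L =R
  L * RInt (fun x => u x ^ 2) 0 L - Qs L u N + sm (rterm L u a b) (S N).
Proof.
  intros HL Hu. induction N.
  - unfold Pt, Qs; cbn [sm rterm wt].
    rewrite (RInt_extR _ (fun x => u x ^ 2 - (2 * a O) * u x + a O ^ 2)).
    2:{ intro x. unfold Fterm. rewrite cz0, sz0. ring. }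
    rewrite RInt_plusR, RInt_minusR, RInt_scalR, RInt_constR; try (intro; cont).
    change (INR 0) with 0. rewrite Sc0, Cc0. ring.
  -
    rewrite (RInt_extR _ (fun x => (u x - Pt L a b N x)^2 - 2 * (u x * (a (S N) * cz L (INR (S N)) x + b (S N) * sz L (INR (S N)) x))
        + 2 * (Pt L a b N x * (a (S N) * cz L (INR (S N)) x + b (S N) * sz L (INR (S N)) x))
        + (a (S N) * cz L (INR (S N)) x + b (S N) * sz L (INR (S N)) x)^2)).
    2:{ intro x. rewrite (Pt_S L a b N x). unfold Fterm.  ring. }
    assert (Hc1 : contR (fun x => (u x - Pt L a b N x)^2)) by (intro x; generalize (cont_Pt L a b N); intro; cont).
    assert (Hc2 : contR (fun x => u x * (a (S N) * cz L (INR (S N)) x + b (S N) * sz L (INR (S N)) x)))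
      by (intro x; cont).
    assert (Hc3 : contR (fun x => Pt L a b N x * (a (S N) * cz L (INR (S N)) x + b (S N) * sz L (INR (S N)) x)))
      by (intro x; generalize (cont_Pt L a b N); intros; cont).
    assert (Hc4 : contR (fun x => (a (S N) * cz L (INR (S N)) x + b (S N) * sz L (INR (S N)) x)^2))
      by (intro x; cont).
    rewrite RInt_plusR, RInt_plusR, RInt_minusR, !RInt_scalR; auto;
      try (intro x; apply cont_minus; auto; apply cont_mult; [apply cont_const| auto]);
      try (intro x; apply cont_mult; [apply cont_const| auto]);
      try (intro x; apply cont_plus; [apply cont_minus|]; auto; apply cont_mult; [apply cont_const| auto]).
    assert (E3 : RInt (fun x => Pt L a b N x * (a (S N) * cz L (INR (S N)) x + b (S N) * sz L (INR (S N)) x)) 0 L = 0).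
    { unfold Pt. rewrite (RInt_extR _ (fun x => sm (fun m => Fterm L a b m x * (a (S N) * cz L (INR (S N)) x + b (S N) * sz L (INR (S N)) x)) (S N))).
      2:{ intro x. apply sm_mult_r. }
      rewrite (RInt_sm (fun m x => Fterm L a b m x * (a (S N) * cz L (INR (S N)) x + b (S N) * sz L (INR (S N)) x))).
      2:{ intro m. intro x. generalize (cont_Fterm L a b m); intros; cont. }
      rewrite (sm_ext _ (fun _ => 0)).
      2:{ intros m Hm. apply orth_Fterm; auto. }
      clear. induction (S N); simpl; [ring| rewrite IHn; ring]. }
    assert (E2 : RInt (fun x => u x * (a (S N) * cz L (INR (S N)) x + b (S N) * sz L (INR (S N)) x)) 0 L = a (S N) * Cc L u (INR (S N)) + b (S N) * Sc L u (INR (S N))).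
    { unfold Cc, Sc. rewrite <- !RInt_scalR, <- RInt_plusR. apply RInt_extR; intro; ring.
      all: intro x; cont. }
    rewrite E3, E2, int_sq_t by ( lia || auto).
    2:{ intro x. generalize (cont_Pt L a b N); intro; cont. }
    change (Qs L u (S N)) with (Qs L u N + 2 * (Cc L u (INR (S N))^2 + Sc L u (INR (S N))^2)).
    change (sm (rterm L u a b) (S (S N))) with (sm (rterm L u a b) (S N) +
       2 * ((Cc L u (INR (S N)) - L * a (S N) / 2)^2 + (Sc L u (INR (S N)) - L * b (S N) / 2)^2)).
    set (X := RInt (fun x : R => (u x - Pt L a b N x) ^ 2) 0 L) in *.
    replace (L * (X - 2 * (a (S N) * Cc L u (INR (S N)) + b (S N) * Sc L u (INR (S N))) + 2 * 0 + L / 2 * (a (S N) ^ 2 + b (S N) ^ 2)))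
      with (L * X - L * 2 * (a (S N) * Cc L u (INR (S N)) + b (S N) * Sc L u (INR (S N))) + L * L / 2 * (a (S N) ^ 2 + b (S N) ^ 2)) by field.
    rewrite IHN. field.
Qed.


Lemma bessel L u N : 0 < L -> contR u -> Qs L u N <= L * RInt (fun x => u x ^ 2) 0 L.
Proof.
  intros HL Hu.
  set (a := fun m => match m with O => Cc L u 0 / L | S _ => 2 * Cc L u (INR m) / L end).
  set (b := fun m => 2 * Sc L u (INR m) / L).
  generalize (best_approx L u a b N HL Hu). intro E.
  assert (Hz : sm (rterm L u a b) (S N) = 0).
  { transitivity (sm (fun _ => 0) (S N)); [|apply sm_zero]. apply sm_ext.
    intros m _. destruct m; unfold rterm, a, b; cbv beta iota; [field; lra|]. field; lra. }
  rewrite Hz in E.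
  assert (0 <= L * RInt (fun x => (u x - Pt L a b N x)^2) 0 L).
  { apply Rmult_le_pos; [lra|]. apply RInt_ge0; [lra| |intros; apply pow2_ge_0].
    intro x; generalize (cont_Pt L a b N); intro; cont. }
  lra.
Qed.

Lemma approx_le L u a b N : 0 < L -> contR u ->
  L * RInt (fun x => u x ^ 2) 0 L - Qs L u N <= L * RInt (fun x => (u x - Pt L a b N x)^2) 0 L.
Proof.
  intros HL Hu. rewrite best_approx; auto.
  assert (0 <= sm (rterm L u a b) (S N)); [|lra].
  apply sm_ge0. intro m; destruct m; unfold rterm.
  apply pow2_ge_0. generalize (pow2_ge_0 (Cc L u (INR (S m)) - L * a (S m) / 2)) (pow2_ge_0 (Sc L u (INR (S m)) - L * b (S m) / 2)). lra.
Qed.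

Lemma sm_shift f n : sm f (S n) = f O + sm (fun k => f (S k)) n.
Proof. induction n. simpl; ring. change (sm f (S (S n))) with (sm f (S n) + f (S n)). rewrite IHn. simpl. ring. Qed.

Lemma sm_rev f n : sm f n = sm (fun k => f (n - S k)%nat) n.
Proof.
  induction n. reflexivity.
  change (sm f (S n)) with (sm f n + f n). rewrite (sm_shift (fun k => f (S n - S k)%nat)). rewrite IHn.
  replace (S n - 1)%nat with n by lia. rewrite Rplus_comm. f_equal.
Qed.

Lemma cz_S L k y : cz L (INR (S k)) y = cz L (INR k) y * cz L 1 y - sz L (INR k) y * sz L 1 y.
Proof. unfold cz, sz. rewrite S_INR. rewrite <- cos_plus. f_equal. unfold Rdiv; ring. Qed.
Lemma sz_S L k y : sz L (INR (S k)) y = sz L (INR k) y * cz L 1 y + cz L (INR k) y * sz L 1 y.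
Proof. unfold cz, sz. rewrite S_INR. rewrite <- sin_plus. f_equal. unfold Rdiv; ring. Qed.
Lemma czsz L r y : cz L r y ^ 2 + sz L r y ^ 2 = 1.
Proof. unfold cz, sz. generalize (sin2_cos2 (2*PI*r*y/L)). unfold Rsqr. intro; nra. Qed.
Lemma cz_diff L j k y : (k <= j)%nat ->
  cz L (INR k) y * cz L (INR j) y + sz L (INR k) y * sz L (INR j) y = cz L (INR (j - k)) y.
Proof. intros H. unfold cz, sz. rewrite minus_INR by auto.
  replace (2 * PI * (INR j - INR k) * y / L) with (2*PI*INR j*y/L - 2*PI*INR k*y/L) by (unfold Rdiv; ring).
  rewrite cos_minus. ring. Qed.

Definition An L N y := sm (fun k => cz L (INR k) y) (S N).
Definition Bn L N y := sm (fun k => sz L (INR k) y) (S N).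

Lemma geom L N y :
  An L N y * (cz L 1 y - 1) - Bn L N y * sz L 1 y = cz L (INR (S N)) y - 1 /\
  An L N y * sz L 1 y + Bn L N y * (cz L 1 y - 1) = sz L (INR (S N)) y.
Proof.
  induction N.
  - unfold An, Bn. cbn [sm]. rewrite cz0, sz0. change (INR 1) with 1. split; ring.
  - destruct IHN as [H1 H2].
    change (An L (S N) y) with (An L N y + cz L (INR (S N)) y).
    change (Bn L (S N) y) with (Bn L N y + sz L (INR (S N)) y).
    rewrite (cz_S L (S N)), (sz_S L (S N)). split; nra.
Qed.

Lemma kernel_bound L N y : cz L 1 y < 1 -> An L N y ^ 2 + Bn L N y ^ 2 <= 2 / (1 - cz L 1 y).
Proof.
  intros Hc. destruct (geom L N y) as [H1 H2].
  generalize (czsz L 1 y) (czsz L (INR (S N)) y). intros E1 E2.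
  set (A := An L N y) in *. set (B := Bn L N y) in *. set (c := cz L 1 y) in *. set (s := sz L 1 y) in *.
  set (C := cz L (INR (S N)) y) in *. set (S' := sz L (INR (S N)) y) in *.
  assert (Hk : (A^2+B^2) * (2 - 2*c) = 2 - 2*C).
  { replace ((A^2+B^2)*(2-2*c)) with ((A*(c-1) - B*s)^2 + (A*s + B*(c-1))^2) by nra.
    rewrite H1, H2. nra. }
  assert (HC : C >= -1) by nra.
  apply Rmult_le_reg_r with (1 - c); [lra|]. unfold Rdiv. rewrite Rmult_assoc, Rinv_l by lra. nra.
Qed.

Definition fw N m := match m with O => INR N + 1 | S _ => 2 * (INR N + 1 - INR m) end.
Definition Fe L N y := sm (fun m => fw N m * cz L (INR m) y) (S N).

Lemma cross_sum L N y :
  An L N y * cz L (INR (S N)) y + Bn L N y * sz L (INR (S N)) y = sm (fun k => cz L (INR (S k)) y) (S N).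
Proof.
  unfold An, Bn. rewrite !sm_mult_r, <- sm_plus.
  rewrite (sm_ext _ (fun k => cz L (INR (S N - k)) y)).
  2:{ intros m Hm. apply cz_diff. lia. }
  rewrite sm_rev. apply sm_ext. intros m Hm. f_equal. f_equal. lia.
Qed.

Lemma fejer_id L N y : An L N y ^ 2 + Bn L N y ^ 2 = Fe L N y.
Proof.
  induction N.
  - unfold An, Bn, Fe. cbn [sm]. unfold fw. rewrite cz0, sz0. simpl. ring.
  - change (An L (S N) y) with (An L N y + cz L (INR (S N)) y).
    change (Bn L (S N) y) with (Bn L N y + sz L (INR (S N)) y).
    replace ((An L N y + cz L (INR (S N)) y) ^ 2 + (Bn L N y + sz L (INR (S N)) y) ^ 2) with
      ((An L N y ^ 2 + Bn L N y ^ 2) + 2 * (An L N y * cz L (INR (S N)) y + Bn L N y * sz L (INR (S N)) y)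
        + (cz L (INR (S N)) y ^ 2 + sz L (INR (S N)) y ^ 2)) by ring.
    rewrite IHN, cross_sum, czsz.
    unfold Fe. change (sm (fun m => fw (S N) m * cz L (INR m) y) (S (S N))) with
      (sm (fun m => fw (S N) m * cz L (INR m) y) (S N) + fw (S N) (S N) * cz L (INR (S N)) y).
    rewrite (sm_ext (fun m => fw (S N) m * cz L (INR m) y) (fun m => fw N m * cz L (INR m) y + wt m * cz L (INR m) y)).
    2:{ intros m Hm. destruct m; unfold fw, wt; rewrite ?S_INR; ring. }
    rewrite sm_plus. rewrite (sm_shift (fun m => wt m * cz L (INR m) y)).
    change (sm (fun k => cz L (INR (S k)) y) (S N)) with (sm (fun k => cz L (INR (S k)) y) N + cz L (INR (S N)) y).
    replace (sm (fun k => wt (S k) * cz L (INR (S k)) y) N) with (2 * sm (fun k => cz L (INR (S k)) y) N)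
      by (rewrite <- sm_scal; reflexivity).
    unfold wt, fw. rewrite cz0, !S_INR. ring.
Qed.


Definition Kf L N y := Fe L N y / (INR N + 1).

Lemma INRp1 N : 0 < INR N + 1.
Proof. generalize (pos_INR N); lra. Qed.

Lemma Kf_ge0 L N y : 0 <= Kf L N y.
Proof. unfold Kf. rewrite <- fejer_id. apply Rdiv_le_0_compat; [|apply INRp1].
  generalize (pow2_ge_0 (An L N y)) (pow2_ge_0 (Bn L N y)); lra. Qed.

Lemma Kf_le L N y c : cz L 1 y <= c -> c < 1 -> Kf L N y <= 2 / ((INR N + 1) * (1 - c)).
Proof.
  intros H1 H2. unfold Kf. rewrite <- fejer_id.
  generalize (kernel_bound L N y ltac:(lra)). intro Hb. generalize (INRp1 N); intro HN.
  apply Rle_trans with ((2 / (1 - cz L 1 y)) / (INR N + 1)).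
  - unfold Rdiv. apply Rmult_le_compat_r; [left; apply Rinv_0_lt_compat; lra|]. exact Hb.
  - unfold Rdiv. rewrite Rinv_mult. rewrite (Rmult_comm (/ (INR N + 1))). rewrite <- Rmult_assoc.
    apply Rmult_le_compat_r; [left; apply Rinv_0_lt_compat; lra|].
    apply Rmult_le_compat_l; [lra|]. apply Rinv_le_contravar; lra.
Qed.

Lemma cont_Fe L N : contR (Fe L N).
Proof. unfold Fe. intro x. apply (cont_sm (fun m y => fw N m * cz L (INR m) y)). intro m; intro; cont. Qed.
Lemma cont_Kf L N : contR (Kf L N).
Proof. unfold Kf. intro x. generalize (cont_Fe L N); intro; cont. Qed.
Lemma cont_Kf_sub L N x : contR (fun s => Kf L N (s - x)).
Proof. intro s. apply (continuous_comp (fun s => s - x) (Kf L N)). cont. apply cont_Kf. Qed.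

Lemma cz_sub L r s x : cz L r (s - x) = cz L r s * cz L r x + sz L r s * sz L r x.
Proof. unfold cz, sz. rewrite <- cos_minus. f_equal. unfold Rdiv; ring. Qed.

Definition aF L (v : R -> R) N m := fw N m * Cc L v (INR m) / (L * (INR N + 1)).
Definition bF L (v : R -> R) N m := fw N m * Sc L v (INR m) / (L * (INR N + 1)).

Lemma fejer_expand L v N x : 0 < L -> contR v ->
  RInt (fun s => v s * Kf L N (s - x)) 0 L =R L * Pt L (aF L v N) (bF L v N) N x.
Proof.
  intros HL Hv. generalize (INRp1 N); intro HN.
  rewrite (RInt_extR _ (fun s => sm (fun m => (fw N m / (INR N + 1) * cz L (INR m) x) * (v s * cz L (INR m) s)
                + (fw N m / (INR N + 1) * sz L (INR m) x) * (v s * sz L (INR m) s)) (S N))).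
  2:{ intro s. unfold Kf, Fe. unfold Rdiv at 1. rewrite Rmult_comm, sm_mult_r, sm_mult_r. apply sm_ext.
      intros m _. rewrite cz_sub. field. lra. }
  rewrite (RInt_sm (fun m s => (fw N m / (INR N + 1) * cz L (INR m) x) * (v s * cz L (INR m) s)
                + (fw N m / (INR N + 1) * sz L (INR m) x) * (v s * sz L (INR m) s))).
  2:{ intros m s. cont. }
  unfold Pt. rewrite <- sm_scal. apply sm_ext. intros m _.
  rewrite RInt_plusR, !RInt_scalR; try (intro; cont).
  unfold Fterm, aF, bF, Cc, Sc. field. lra.
Qed.

Lemma Cc_one_S L m : 0 < L -> Cc L (fun _ => 1) (INR (S m)) = 0.
Proof. intros HL. unfold Cc. rewrite (RInt_extR _ (cz L (IZR (Z.of_nat (S m))))).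
  rewrite int_cz by auto. destruct (Z.eq_dec (Z.of_nat (S m)) 0); [lia|reflexivity].
  intro s. rewrite <- INR_IZR_INZ. ring. Qed.
Lemma Sc_one L m : 0 < L -> Sc L (fun _ => 1) (INR m) = 0.
Proof. intros HL. unfold Sc. rewrite (RInt_extR _ (sz L (IZR (Z.of_nat m)))).
  apply int_sz; auto. intro s. rewrite <- INR_IZR_INZ. ring. Qed.
Lemma Cc_one_0 L : Cc L (fun _ => 1) (INR 0) = L.
Proof. unfold Cc. rewrite (RInt_extR _ (fun _ => 1)). rewrite RInt_constR; ring.
  intro s. rewrite cz0. ring. Qed.

Lemma Kf_int L N x : 0 < L -> RInt (fun s => Kf L N (s - x)) 0 L =R L.
Proof.
  intros HL. generalize (INRp1 N); intro HN.
  rewrite (RInt_extR _ (fun s => (fun _ => 1) s * Kf L N (s - x))) by (intro; ring).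
  rewrite fejer_expand; auto; [|intro; cont].
  unfold Pt. rewrite sm_shift.
  rewrite (sm_ext _ (fun _ => 0)). rewrite sm_zero.
  - unfold Fterm, aF, bF. rewrite Cc_one_0, Sc_one, cz0, sz0 by auto. unfold fw. field. lra.
  - intros m _. unfold Fterm, aF, bF. rewrite Cc_one_S, Sc_one by auto. field. lra.
Qed.


Lemma cos_2pi_minus t : cos (2*PI - t) = cos t.
Proof. rewrite cos_minus, cos_2PI, sin_2PI. ring. Qed.

Lemma cos_d_lt1 d : 0 < d <= PI -> cos d < 1.
Proof. intros H. rewrite <- cos_0. apply cos_decreasing_1; lra. Qed.

Lemma cos_far L d s x : 0 < L -> 0 < d -> d <= L / 2 -> d < Rabs (s - x) < L - d ->
  cz L 1 (s - x) <= cos (2*PI*d/L).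
Proof.
  intros HL Hd HdL H. generalize PI_RGT_0; intro HPI.
  assert (E : cz L 1 (s - x) = cos (2*PI*Rabs (s-x)/L)).
  { unfold cz. unfold Rabs. destruct (Rcase_abs (s - x)).
    - rewrite <- cos_neg. f_equal. unfold Rdiv; ring.
    - f_equal; unfold Rdiv; ring. }
  rewrite E. set (t := 2*PI*Rabs (s-x)/L). set (dd := 2*PI*d/L).
  assert (Hdd : 0 < dd <= PI).
  { unfold dd. split. apply Rdiv_lt_0_compat; [nra|lra].
    apply Rmult_le_reg_r with L; auto. unfold Rdiv. rewrite Rmult_assoc, Rinv_l by lra. nra. }
  assert (Ht1 : dd < t).
  { unfold dd, t. unfold Rdiv. apply Rmult_lt_compat_r. apply Rinv_0_lt_compat; lra. nra. }
  assert (Ht2 : t < 2*PI - dd).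
  { unfold dd, t. apply Rmult_lt_reg_r with L; auto. unfold Rdiv.
    replace ((2*PI - 2*PI*d*/L)*L) with (2*PI*(L-d)) by (field; lra).
    rewrite Rmult_assoc, Rinv_l, Rmult_1_r by lra. nra. }
  destruct (Rle_lt_dec t PI).
  - left. apply cos_decreasing_1; lra.
  - rewrite <- cos_2pi_minus. left. apply cos_decreasing_1; lra.
Qed.

Definition Gk L N d := 2 / ((INR N + 1) * (1 - cos (2*PI*d/L))).

Lemma Gk_ge0 L N d : 0 < L -> 0 < d <= L/2 -> 0 <= Gk L N d.
Proof. intros HL Hd. unfold Gk. generalize (INRp1 N) PI_RGT_0; intros.
  assert (cos (2*PI*d/L) < 1).
  { apply cos_d_lt1. split. apply Rdiv_lt_0_compat; [nra|lra].
    apply Rmult_le_reg_r with L; auto. unfold Rdiv. rewrite Rmult_assoc, Rinv_l by lra. nra. }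
  apply Rdiv_le_0_compat; [lra|]. apply Rmult_lt_0_compat; lra. Qed.

Lemma pointwise L N d u M U s x : 0 < L -> 0 < d <= L/2 -> 0 <= M ->
  (forall t, u (t + L) = u t) ->
  (forall a b, -L <= a <= 2*L -> -L <= b <= 2*L -> Rabs (u a - u b) <= M * Rabs (a - b)) ->
  (forall t, 0 <= t <= L -> Rabs (u t) <= U) ->
  0 <= s <= L -> 0 <= x <= L ->
  Rabs ((u s - u x) * Kf L N (s - x)) <= M * d * Kf L N (s - x) + 2 * U * Gk L N d.
Proof.
  intros HL Hd HM Hper Hlip HU Hs Hx.
  generalize (Kf_ge0 L N (s - x)) (Gk_ge0 L N d HL Hd); intros HK HG.
  assert (HU0 : 0 <= U) by (generalize (HU 0 ltac:(lra)) (Rabs_pos (u 0)); lra).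
  rewrite Rabs_mult, (Rabs_pos_eq (Kf L N (s - x))) by auto.
  assert (Hnear : Rabs (u s - u x) <= M * d -> Rabs (u s - u x) * Kf L N (s - x) <= M * d * Kf L N (s - x) + 2 * U * Gk L N d).
  { intros H. generalize (Rmult_le_compat_r _ _ _ HK H). generalize (Rmult_le_pos _ _ (Rmult_le_pos 2 U ltac:(lra) HU0) HG). lra. }
  destruct (Rle_lt_dec (Rabs (s - x)) d) as [H1|H1].
  { apply Hnear. apply Rle_trans with (M * Rabs (s - x)). apply Hlip; lra. apply Rmult_le_compat_l; lra. }
  destruct (Rle_lt_dec (L - d) (Rabs (s - x))) as [H2|H2].
  { apply Hnear. unfold Rabs in H2. destruct (Rcase_abs (s - x)).
    - rewrite <- (Hper s). apply Rle_trans with (M * Rabs (s + L - x)). apply Hlip; lra.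
      apply Rmult_le_compat_l; auto. unfold Rabs; destruct (Rcase_abs (s + L - x)); lra.
    - replace (u s) with (u (s - L)) by (rewrite <- (Hper (s - L)); f_equal; ring).
      apply Rle_trans with (M * Rabs (s - L - x)). apply Hlip; lra.
      apply Rmult_le_compat_l; auto. unfold Rabs; destruct (Rcase_abs (s - L - x)); lra. }
  assert (HKb : Kf L N (s - x) <= Gk L N d).
  { unfold Gk. apply Kf_le. apply cos_far; auto; lra.
    apply cos_d_lt1. generalize PI_RGT_0; intro. split. apply Rdiv_lt_0_compat; [nra|lra].
    apply Rmult_le_reg_r with L; auto. unfold Rdiv. rewrite Rmult_assoc, Rinv_l by lra. nra. }
  assert (Hd2 : Rabs (u s - u x) <= 2 * U).
  { unfold Rminus. eapply Rle_trans. apply Rabs_triang. rewrite Rabs_Ropp. generalize (HU s Hs) (HU x Hx); lra. }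
  generalize (Rmult_le_pos _ _ (Rmult_le_pos M d HM ltac:(lra)) HK).
  assert (Rabs (u s - u x) * Kf L N (s - x) <= 2 * U * Gk L N d).
  { apply Rmult_le_compat; auto. apply Rabs_pos. }
  lra.
Qed.

Lemma fejer_err L N d u M U x : 0 < L -> 0 < d <= L/2 -> 0 <= M -> contR u ->
  (forall t, u (t + L) = u t) ->
  (forall a b, -L <= a <= 2*L -> -L <= b <= 2*L -> Rabs (u a - u b) <= M * Rabs (a - b)) ->
  (forall t, 0 <= t <= L -> Rabs (u t) <= U) ->
  0 <= x <= L ->
  Rabs (u x - Pt L (aF L u N) (bF L u N) N x) <= M * d + 2 * U * Gk L N d.
Proof.
  intros HL Hd HM Hu Hper Hlip HU Hx.
  generalize (cont_Kf_sub L N x); intro HKc.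
  assert (E : L * (Pt L (aF L u N) (bF L u N) N x - u x) = RInt (fun s => (u s - u x) * Kf L N (s - x)) 0 L).
  { rewrite Rmult_minus_distr_l. rewrite <- fejer_expand by auto.
    rewrite (RInt_extR (fun s => (u s - u x) * Kf L N (s - x)) (fun s => u s * Kf L N (s - x) - u x * Kf L N (s - x))) by (intro; ring).
    rewrite RInt_minusR by (intro; cont). rewrite RInt_scalR, Kf_int by auto. ring. }
  apply Rmult_le_reg_l with L; auto.
  rewrite <- (Rabs_pos_eq L) at 1 by lra. rewrite <- Rabs_mult.
  rewrite <- Rabs_Ropp. replace (- (L * (u x - Pt L (aF L u N) (bF L u N) N x))) with
    (L * (Pt L (aF L u N) (bF L u N) N x - u x)) by ring.
  rewrite E. eapply Rle_trans. apply abs_RInt_leR; [lra| intro; cont].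
  eapply Rle_trans. apply (RInt_leR _ (fun s => M * d * Kf L N (s - x) + 2 * U * Gk L N d)); [lra|intro;cont|intro;cont|].
  intros s Hs. apply pointwise; auto.
  rewrite RInt_plusR, RInt_scalR, Kf_int, RInt_constR; auto; try (intro; cont). lra.
Qed.


Lemma nat_arch r : exists N : nat, r < INR N.
Proof.
  destruct (archimed r) as [H1 H2].
  destruct (Z_lt_le_dec 0 (up r)) as [Hz|Hz].
  - exists (Z.to_nat (up r)). rewrite INR_IZR_INZ, Z2Nat.id by lia. lra.
  - exists O. simpl. apply IZR_le in Hz. lra.
Qed.

Lemma cont_pt (f : R -> R) x : continuous f x -> continuity_pt f x.
Proof. intro H. apply continuity_pt_filterlim. exact H. Qed.

Lemma bound_on (f : R -> R) a b : a <= b -> contR f -> exists M, 0 <= M /\ forall t, a <= t <= b -> Rabs (f t) <= M.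
Proof.
  intros Hab Hf. destruct (continuity_ab_maj (fun t => Rabs (f t)) a b Hab) as [Mx [HM _]].
  { intros c _. apply cont_pt. cont. }
  exists (Rabs (f Mx)). split; [apply Rabs_pos|]. intros; apply HM; auto.
Qed.

Lemma lipschitz_on (u du : R -> R) a b : a <= b -> (forall x, derivable_pt_lim u x (du x)) -> contR du ->
  exists M, 0 <= M /\ forall x y, a <= x <= b -> a <= y <= b -> Rabs (u x - u y) <= M * Rabs (x - y).
Proof.
  intros Hab Hd Hdu. destruct (bound_on du a b Hab Hdu) as [M [HM0 HM]].
  exists M. split; auto. intros x y Hx Hy.
  destruct (MVT_abs u du y x) as [c [Hc1 Hc2]]. { intros; apply Hd. }
  rewrite Hc1. apply Rmult_le_compat_r; [apply Rabs_pos|]. apply HM.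
  split. apply Rle_trans with (Rmin y x); [apply Rmin_glb; lra| lra].
  apply Rle_trans with (Rmax y x); [lra| apply Rmax_lub; lra].
Qed.

Theorem parseval L u du : 0 < L -> (forall x, derivable_pt_lim u x (du x)) -> contR du ->
  (forall t, u (t + L) = u t) ->
  Un_cv (Qs L u) (L * RInt (fun x => u x ^ 2) 0 L).
Proof.
  intros HL Hd Hdu Hper.
  assert (Hu : contR u) by (apply deriv_cont with du; auto).
  destruct (lipschitz_on u du (-L) (2*L) ltac:(lra) Hd Hdu) as [M [HM0 Hlip]].
  destruct (bound_on u 0 L ltac:(lra) Hu) as [U [HU0 HU]].
  intros eps Heps.
  set (eta := sqrt eps / L).
  assert (Heta : 0 < eta) by (unfold eta; apply Rdiv_lt_0_compat; auto; apply sqrt_lt_R0; auto).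
  set (d := Rmin (L/2) (eta / (2 * (M + 1)))).
  assert (Hd0 : 0 < d <= L/2).
  { unfold d. split. apply Rmin_glb_lt; [lra|]. apply Rdiv_lt_0_compat; lra. apply Rmin_l. }
  assert (HMd : M * d < eta / 2).
  { apply Rle_lt_trans with (M * (eta / (2 * (M + 1)))).
    apply Rmult_le_compat_l; auto; apply Rmin_r.
    apply Rmult_lt_reg_r with (2 * (M+1)); [lra|]. unfold Rdiv. field_simplify; [|lra]. nra. }
  set (cd := cos (2*PI*d/L)).
  assert (Hcd : cd < 1).
  { unfold cd. apply cos_d_lt1. generalize PI_RGT_0; intro. split. apply Rdiv_lt_0_compat; [nra|lra].
    apply Rmult_le_reg_r with L; auto. unfold Rdiv. rewrite Rmult_assoc, Rinv_l by lra. nra. }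
  destruct (nat_arch (8 * U / (eta * (1 - cd)))) as [N0 HN0].
  exists N0. intros N HN. unfold R_dist.
  assert (HG : 2 * U * Gk L N d < eta / 2).
  { unfold Gk. fold cd. apply le_INR in HN.
    assert (H1 : 0 < 1 - cd) by lra.
    assert (HX : 8 * U / (eta * (1 - cd)) < INR N + 1) by lra.
    assert (HX' : 8 * U < (INR N + 1) * (eta * (1 - cd))).
    { apply Rmult_lt_reg_r with (/ (eta * (1 - cd))). apply Rinv_0_lt_compat; nra.
      replace (8 * U / (eta * (1 - cd))) with (8 * U * / (eta * (1 - cd))) in HX by reflexivity.
      replace ((INR N + 1) * (eta * (1 - cd)) * / (eta * (1 - cd))) with (INR N + 1) by (field; nra). lra. }
    generalize (INRp1 N); intro.
    apply Rmult_lt_reg_r with ((INR N + 1) * (1 - cd)). nra.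
    unfold Rdiv. replace (2 * U * (2 * / ((INR N + 1) * (1 - cd))) * ((INR N + 1) * (1 - cd))) with (4 * U) by (field; nra).
    nra. }
  set (E := M * d + 2 * U * Gk L N d).
  assert (HE0 : 0 <= E) by (unfold E; generalize (Gk_ge0 L N d HL Hd0); intro; nra).
  assert (HE : E < eta) by (unfold E; lra).
  assert (Hint : RInt (fun x => (u x - Pt L (aF L u N) (bF L u N) N x)^2) 0 L <= L * E^2).
  { rewrite <- (Rmult_1_r (L * E^2)). replace (L * E^2 * 1) with ((L - 0) * E^2) by ring.
    rewrite <- RInt_constR. apply RInt_leR; [lra| intro; generalize (cont_Pt L (aF L u N) (bF L u N) N); intro; cont | intro; cont |].
    intros x Hx. generalize (fejer_err L N d u M U x HL Hd0 HM0 Hu Hper Hlip HU Hx). fold E. intro Hb.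
    rewrite <- (Rabs_pos_eq E) in Hb by auto. apply Rsqr_le_abs_1 in Hb. unfold Rsqr in Hb. nra. }
  generalize (approx_le L u (aF L u N) (bF L u N) N HL Hu) (bessel L u N HL Hu). intros H1 H2.
  rewrite Rabs_minus_sym, Rabs_pos_eq by lra.
  assert (HE2 : L * E < sqrt eps).
  { apply Rmult_lt_reg_r with (/ L). apply Rinv_0_lt_compat; lra.
    replace (L * E * / L) with E by (field; lra). exact HE. }
  assert (Hs : sqrt eps * sqrt eps = eps) by (apply sqrt_sqrt; lra).
  assert (0 <= L * E) by nra.
  nra.
Qed.


Lemma dpl_ext (f g : R -> R) x l : (forall t, f t = g t) -> derivable_pt_lim f x l -> derivable_pt_lim g x l.
Proof. intros H Hf. apply is_derive_Reals. apply (is_derive_ext f g); auto. apply is_derive_Reals; auto. Qed.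

Lemma dpl_shift (f : R -> R) c x l : derivable_pt_lim f (x + c) l -> derivable_pt_lim (fun s => f (s + c)) x l.
Proof.
  intro H. assert (Hs : derivable_pt_lim (fun s => s + c) x 1).
  { apply is_derive_Reals. auto_derive; auto. }
  generalize (derivable_pt_lim_comp (fun s => s + c) f x 1 l Hs H). rewrite Rmult_1_r. auto.
Qed.

Lemma tower_periodic (D : nat -> R -> R) L : deriv_tower D -> (forall s, D 0%nat (s + L) = D 0%nat s) ->
  forall k s, D k (s + L) = D k s.
Proof.
  intros HD H0 k. induction k; auto.
  intro x. apply (uniqueness_limite (fun s => D k (s + L)) x).
  - apply dpl_shift. apply HD.
  - apply (dpl_ext (D k)). intro; symmetry; auto. apply HD.
Qed.

Lemma tower_cont (D : nat -> R -> R) : deriv_tower D -> forall k, contR (D k).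
Proof. intros HD k. apply deriv_cont with (D (S k)). intro; apply HD. Qed.

Lemma ibp L u du z : 0 < L -> (forall x, derivable_pt_lim u x (du x)) -> contR du -> (forall t, u (t + L) = u t) ->
  Cc L du (IZR z) = 2*PI*IZR z/L * Sc L u (IZR z) /\ Sc L du (IZR z) = - (2*PI*IZR z/L) * Cc L u (IZR z).
Proof.
  intros HL Hd Hdu Hper. assert (Hu : contR u) by (apply deriv_cont with du; auto).
  assert (E0 : forall v : R -> R, v (0 + L) = v L) by (intros; f_equal; ring).
  assert (HuL : u L = u 0) by (rewrite <- (E0 u); auto).
  split.
  - unfold Cc, Sc. rewrite <- RInt_scalR by (intro; cont).
    apply Rminus_diag_uniq. rewrite <- RInt_minusR by (intro; cont).
    rewrite (RInt_deriv (fun s => u s * cz L (IZR z) s)).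
    + unfold cz. replace (2*PI*IZR z*L/L) with (2*PI*IZR z) by (field; lra). rewrite cos2piz, HuL.
      replace (2*PI*IZR z*0/L) with 0 by (field; lra). rewrite cos_0. ring.
    + intro x. unfold cz, sz. apply (is_derive_ext (fun s => u s * cos (2*PI*IZR z*s/L))); [reflexivity|].
      replace (du x * cos (2*PI*IZR z*x/L) - 2*PI*IZR z/L * (u x * sin (2*PI*IZR z*x/L))) with
        (du x * cos (2*PI*IZR z*x/L) + u x * (- sin (2*PI*IZR z*x/L) * (2*PI*IZR z/L))) by ring.
      apply (is_derive_mult u (fun s => cos (2*PI*IZR z*s/L))).
      * apply is_derive_Reals; auto.
      * auto_derive; auto. toR. unfold Rdiv. ring.
      * intros; apply Rmult_comm.
    + intro x; cont.
  - unfold Cc, Sc. rewrite Ropp_mult_distr_l_reverse, <- RInt_scalR by (intro; cont).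
    apply Rplus_opp_r_uniq. rewrite Rplus_comm. rewrite <- RInt_plusR by (intro; cont).
    rewrite (RInt_deriv (fun s => u s * sz L (IZR z) s)).
    + unfold sz. replace (2*PI*IZR z*L/L) with (2*PI*IZR z) by (field; lra). rewrite sin2piz.
      replace (2*PI*IZR z*0/L) with 0 by (field; lra). rewrite sin_0. ring.
    + intro x. unfold cz, sz. apply (is_derive_ext (fun s => u s * sin (2*PI*IZR z*s/L))); [reflexivity|].
      replace (du x * sin (2*PI*IZR z*x/L) + 2*PI*IZR z/L * (u x * cos (2*PI*IZR z*x/L))) with
        (du x * sin (2*PI*IZR z*x/L) + u x * (cos (2*PI*IZR z*x/L) * (2*PI*IZR z/L))) by ring.
      apply (is_derive_mult u (fun s => sin (2*PI*IZR z*s/L))).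
      * apply is_derive_Reals; auto.
      * auto_derive; auto. toR. unfold Rdiv. ring.
      * intros; apply Rmult_comm.
    + intro x; cont.
Qed.


Definition symZ (a : Z -> R) N := a 0%Z + sm (fun m => a (Z.of_nat (S m)) + a (- Z.of_nat (S m))%Z) N.

Lemma sf_sm f n : sum_f_R0 f n = sm f (S n).
Proof. induction n; simpl; [ring| rewrite IHn; simpl; ring]. Qed.

Lemma sm_S f n : sm f (S n) = sm f n + f n.
Proof. reflexivity. Qed.

Lemma sumZ_sym a N : sumZ_partial a N = symZ a N.
Proof.
  unfold sumZ_partial. rewrite sf_sm. induction N.
  - simpl. unfold symZ. simpl. ring.
  - replace (2 * S N)%nat with (S (S (2 * N))) by lia.
    rewrite sm_shift. change (sm (fun k => a (Z.of_nat (S k) - Z.of_nat (S N))%Z) (S (S (2 * N))))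
      with (sm (fun k => a (Z.of_nat (S k) - Z.of_nat (S N))%Z) (S (2 * N)) + a (Z.of_nat (S (S (2*N))) - Z.of_nat (S N))%Z).
    rewrite (sm_ext _ (fun j => a (Z.of_nat j - Z.of_nat N)%Z)).
    2:{ intros m _. f_equal. lia. }
    rewrite IHN. unfold symZ. rewrite (sm_S (fun m => a (Z.of_nat (S m)) + a (- Z.of_nat (S m))%Z) N).
    replace (Z.of_nat 0 - Z.of_nat (S N))%Z with (- Z.of_nat (S N))%Z by lia.
    replace (Z.of_nat (S (S (2 * N))) - Z.of_nat (S N))%Z with (Z.of_nat (S N)) by lia.
    ring.
Qed.

Lemma symZ_ext a b N : (forall z, a z = b z) -> symZ a N = symZ b N.
Proof. intros H. unfold symZ. rewrite H. f_equal. apply sm_ext. intros; rewrite !H; auto. Qed.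
Lemma symZ_plus a b N : symZ (fun z => a z + b z) N = symZ a N + symZ b N.
Proof. unfold symZ. rewrite (sm_ext _ (fun m => (a (Z.of_nat (S m)) + a (- Z.of_nat (S m))%Z) + (b (Z.of_nat (S m)) + b (- Z.of_nat (S m))%Z))).
  rewrite sm_plus. ring. intros; ring. Qed.
Lemma symZ_scal c a N : symZ (fun z => c * a z) N = c * symZ a N.
Proof. unfold symZ. rewrite (sm_ext _ (fun m => c * (a (Z.of_nat (S m)) + a (- Z.of_nat (S m))%Z))).
  rewrite sm_scal. ring. intros; ring. Qed.

Definition Xf L (f1 f2 : R -> R) (z : Z) :=
  (Cc L f1 (IZR z) + Sc L f2 (IZR z))^2 + (Cc L f2 (IZR z) - Sc L f1 (IZR z))^2.

Lemma Cc_neg L u r : Cc L u (- r) = Cc L u r.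
Proof. unfold Cc, cz. apply RInt_extR. intro s. f_equal. rewrite <- cos_neg. f_equal. unfold Rdiv; ring. Qed.
Lemma Sc_neg L u r : contR u -> Sc L u (- r) = - Sc L u r.
Proof. intros Hu. unfold Sc. replace (- RInt (fun s => u s * sz L r s) 0 L) with ((-1) * RInt (fun s => u s * sz L r s) 0 L) by ring.
  rewrite <- RInt_scalR by (intro; cont).
  apply RInt_extR. intro s. unfold sz. replace (2*PI*(-r)*s/L) with (- (2*PI*r*s/L)) by (unfold Rdiv; ring).
  rewrite sin_neg. ring. Qed.

Lemma Qs_sym L p1 p2 N : contR p1 -> contR p2 -> symZ (Xf L p1 p2) N = Qs L p1 N + Qs L p2 N.
Proof.
  intros H1 H2. unfold symZ, Qs. rewrite !sm_shift.
  assert (Hs : sm (fun m => Xf L p1 p2 (Z.of_nat (S m)) + Xf L p1 p2 (- Z.of_nat (S m))%Z) N =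
     sm (fun k => wt (S k) * (Cc L p1 (INR (S k)) ^ 2 + Sc L p1 (INR (S k)) ^ 2)) N +
     sm (fun k => wt (S k) * (Cc L p2 (INR (S k)) ^ 2 + Sc L p2 (INR (S k)) ^ 2)) N).
  { rewrite <- sm_plus. apply sm_ext. intros m _. unfold Xf, wt.
    rewrite opp_IZR, !Cc_neg, !Sc_neg by auto. rewrite <- INR_IZR_INZ. ring. }
  assert (H0 : Xf L p1 p2 0%Z = wt 0 * (Cc L p1 (INR 0) ^ 2 + Sc L p1 (INR 0) ^ 2) +
                                  wt 0 * (Cc L p2 (INR 0) ^ 2 + Sc L p2 (INR 0) ^ 2)).
  { unfold Xf, wt. replace (INR 0) with (IZR 0) by reflexivity. rewrite !Sc0. ring. }
  lra.
Qed.

Lemma Cc_lin L f g a r : contR f -> contR g -> Cc L (fun s => f s + a * g s) r = Cc L f r + a * Cc L g r.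
Proof. intros. unfold Cc. rewrite <- RInt_scalR, <- RInt_plusR by (intro; cont). apply RInt_extR; intro; ring. Qed.
Lemma Sc_lin L f g a r : contR f -> contR g -> Sc L (fun s => f s + a * g s) r = Sc L f r + a * Sc L g r.
Proof. intros. unfold Sc. rewrite <- RInt_scalR, <- RInt_plusR by (intro; cont). apply RInt_extR; intro; ring. Qed.
Lemma Cc_lin' L f g a r : contR f -> contR g -> Cc L (fun s => f s - a * g s) r = Cc L f r - a * Cc L g r.
Proof. intros. unfold Cc. rewrite <- RInt_scalR, <- RInt_minusR by (intro; cont). apply RInt_extR; intro; ring. Qed.
Lemma Sc_lin' L f g a r : contR f -> contR g -> Sc L (fun s => f s - a * g s) r = Sc L f r - a * Sc L g r.
Proof. intros. unfold Sc. rewrite <- RInt_scalR, <- RInt_minusR by (intro; cont). apply RInt_extR; intro; ring. Qed.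



Lemma X_p (D1 D2 : nat -> R -> R) L a z : 0 < L -> deriv_tower D1 -> deriv_tower D2 ->
  (forall s, D1 0%nat (s + L) = D1 0%nat s) -> (forall s, D2 0%nat (s + L) = D2 0%nat s) ->
  Xf L (fun s => D1 2%nat s + a * D2 1%nat s) (fun s => D2 2%nat s - a * D1 1%nat s) z =
  (2*PI*IZR z/L * (a - 2*PI*IZR z/L))^2 * Xf L (D1 0%nat) (D2 0%nat) z.
Proof.
  intros HL H1 H2 P1 P2.
  generalize (tower_periodic D1 L H1 P1) (tower_periodic D2 L H2 P2) (tower_cont D1 H1) (tower_cont D2 H2).
  intros Q1 Q2 C1 C2.
  unfold Xf. rewrite Cc_lin, Sc_lin, Cc_lin', Sc_lin' by auto.
  destruct (ibp L (D1 1%nat) (D1 2%nat) z HL (H1 1%nat) (C1 2%nat) (Q1 1%nat)) as [E1 E2].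
  destruct (ibp L (D2 1%nat) (D2 2%nat) z HL (H2 1%nat) (C2 2%nat) (Q2 1%nat)) as [E3 E4].
  destruct (ibp L (D1 0%nat) (D1 1%nat) z HL (H1 0%nat) (C1 1%nat) (Q1 0%nat)) as [E5 E6].
  destruct (ibp L (D2 0%nat) (D2 1%nat) z HL (H2 0%nat) (C2 1%nat) (Q2 0%nat)) as [E7 E8].
  rewrite E1, E2, E3, E4, E5, E6, E7, E8. ring.
Qed.

Lemma X_d1 (D1 D2 : nat -> R -> R) L z : 0 < L -> deriv_tower D1 -> deriv_tower D2 ->
  (forall s, D1 0%nat (s + L) = D1 0%nat s) -> (forall s, D2 0%nat (s + L) = D2 0%nat s) ->
  Xf L (D1 1%nat) (D2 1%nat) z = (2*PI*IZR z/L)^2 * Xf L (D1 0%nat) (D2 0%nat) z.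
Proof.
  intros HL H1 H2 P1 P2.
  generalize (tower_periodic D1 L H1 P1) (tower_periodic D2 L H2 P2) (tower_cont D1 H1) (tower_cont D2 H2).
  intros Q1 Q2 C1 C2. unfold Xf.
  destruct (ibp L (D1 0%nat) (D1 1%nat) z HL (H1 0%nat) (C1 1%nat) (Q1 0%nat)) as [E5 E6].
  destruct (ibp L (D2 0%nat) (D2 1%nat) z HL (H2 0%nat) (C2 1%nat) (Q2 0%nat)) as [E7 E8].
  rewrite E5, E6, E7, E8. ring.
Qed.

Lemma sq_sqrt_lemma a b L : 0 < L -> (/ sqrt L * a)^2 + (/ sqrt L * b)^2 = (a^2 + b^2) / L.
Proof. intros HL. assert (Hs : sqrt L * sqrt L = L) by (apply sqrt_sqrt; lra).
  assert (Hs0 : 0 < sqrt L) by (apply sqrt_lt_R0; lra).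
  unfold Rdiv. replace (/ L) with (/ sqrt L * / sqrt L) by (rewrite <- Rinv_mult, Hs; auto). field. lra. Qed.

Lemma fhat_X (f1 f2 : R -> R) L z : 0 < L -> contR f1 -> contR f2 ->
  fhat_norm2 f1 f2 L z = Xf L f1 f2 z / L.
Proof.
  intros HL C1 C2. unfold fhat_norm2, fhat_re, fhat_im.
  rewrite !Rint_RInt by (lra || (intro; cont)).
  rewrite (RInt_plusR (fun s => f1 s * cos (2 * PI * IZR z * s / L)) (fun s => f2 s * sin (2 * PI * IZR z * s / L)))
    by (intro; cont).
  rewrite (RInt_minusR (fun s => f2 s * cos (2 * PI * IZR z * s / L)) (fun s => f1 s * sin (2 * PI * IZR z * s / L)))
    by (intro; cont).
  unfold Xf, Cc, Sc, cz, sz.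
  assert (Hs : sqrt L * sqrt L = L) by (apply sqrt_sqrt; lra).
  assert (Hs0 : 0 < sqrt L) by (apply sqrt_lt_R0; lra).
  apply sq_sqrt_lemma; auto.
Qed.


Lemma Un_cv_eq (u v : nat -> R) l l' : Un_cv u l -> l = l' -> (forall N, u N = v N) -> Un_cv v l'.
Proof. intros H <- E eps He. destruct (H eps He) as [N0 HN]. exists N0. intros n Hn. rewrite <- E. auto. Qed.

Lemma dpl_lin (f g : R -> R) df dg a x : derivable_pt_lim f x df -> derivable_pt_lim g x dg ->
  derivable_pt_lim (fun s => f s + a * g s) x (df + a * dg).
Proof. intros Hf Hg. apply (dpl_ext (f + mult_real_fct a g)%F).
  intro; unfold plus_fct, mult_real_fct; reflexivity.
  apply derivable_pt_lim_plus; auto. apply derivable_pt_lim_scal; auto. Qed.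
Lemma dpl_lin' (f g : R -> R) df dg a x : derivable_pt_lim f x df -> derivable_pt_lim g x dg ->
  derivable_pt_lim (fun s => f s - a * g s) x (df - a * dg).
Proof. intros Hf Hg. apply (dpl_ext (fun s => f s + (-a) * g s)). intro; ring.
  replace (df - a * dg) with (df + (-a) * dg) by ring. apply dpl_lin; auto. Qed.

Lemma unit_deriv D1 D2 L : arclength_closed_curve D1 D2 L ->
  forall s, D1 1%nat s * D1 2%nat s + D2 1%nat s * D2 2%nat s = 0.
Proof.
  intros [HL [H1 [H2 [HP HU]]]] x.
  assert (A : derivable_pt_lim ((D1 1%nat * D1 1%nat) + (D2 1%nat * D2 1%nat))%F x
     ((D1 2%nat x * D1 1%nat x + D1 1%nat x * D1 2%nat x) + (D2 2%nat x * D2 1%nat x + D2 1%nat x * D2 2%nat x))).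
  { apply derivable_pt_lim_plus; apply derivable_pt_lim_mult; apply H1 || apply H2. }
  assert (B : derivable_pt_lim ((D1 1%nat * D1 1%nat) + (D2 1%nat * D2 1%nat))%F x 0).
  { apply (dpl_ext (fun _ => 1)). intro t. unfold plus_fct, mult_fct. rewrite <- (HU t). ring.
    apply derivable_pt_lim_const. }
  generalize (uniqueness_limite _ _ _ _ A B). lra.
Qed.

Lemma kappa_id u v u' v' a : u^2 + v^2 = 1 -> u * u' + v * v' = 0 ->
  (u' + a * v)^2 + (v' - a * u)^2 = (- u' * v + v' * u - a)^2.
Proof. intros H1 H2.
  assert (E : (- u' * v + v' * u)^2 = (u^2+v^2)*(u'^2+v'^2) - (u*u'+v*v')^2) by ring.
  rewrite H1, H2 in E. nra. Qed.

Lemma int_kappa D1 D2 L n : arclength_closed_curve D1 D2 L -> rotation_number D1 D2 L = IZR n ->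
  RInt (curvature D1 D2) 0 L =R 2 * PI * IZR n.
Proof.
  intros [HL [H1 [H2 [HP HU]]]] Hr. unfold rotation_number in Hr.
  generalize (tower_cont D1 H1) (tower_cont D2 H2). intros C1 C2.
  rewrite Rint_RInt in Hr by (lra || (intro; unfold curvature; cont)).
  generalize PI_RGT_0; intro. apply (f_equal (Rmult (2*PI))) in Hr.
  rewrite <- Rmult_assoc, Rinv_r, Rmult_1_l in Hr by lra. exact Hr.
Qed.

Lemma I0_eq D1 D2 L n : arclength_closed_curve D1 D2 L -> rotation_number D1 D2 L = IZR n ->
  I0 D1 D2 L = L * RInt (fun s => (curvature D1 D2 s - 2 * PI * IZR n / L)^2) 0 L.
Proof.
  intros Hc Hr. generalize (int_kappa D1 D2 L n Hc Hr). destruct Hc as [HL [H1 [H2 [HP HU]]]]. intro E.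
  generalize (tower_cont D1 H1) (tower_cont D2 H2). intros C1 C2.
  unfold I0. rewrite !Rint_RInt by (lra || (intro; unfold curvature; cont)).
  rewrite E. f_equal. apply RInt_extR. intro s. f_equal. field. lra.
Qed.

Lemma Xp_pt D1 D2 L a s : arclength_closed_curve D1 D2 L ->
  (D1 2%nat s + a * D2 1%nat s)^2 + (D2 2%nat s - a * D1 1%nat s)^2 = (curvature D1 D2 s - a)^2.
Proof.
  intros Hc. generalize (unit_deriv D1 D2 L Hc s). destruct Hc as [HL [H1 [H2 [HP HU]]]]. intro E.
  unfold curvature. apply kappa_id; auto.
Qed.

Lemma parseval_p D1 D2 L a : arclength_closed_curve D1 D2 L ->
  Un_cv (fun N => Qs L (fun s => D1 2%nat s + a * D2 1%nat s) N + Qs L (fun s => D2 2%nat s - a * D1 1%nat s) N)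
        (L * RInt (fun s => (curvature D1 D2 s - a)^2) 0 L).
Proof.
  intros Hc. generalize Hc. intros [HL [H1 [H2 [HP HU]]]].
  generalize (tower_periodic D1 L H1 (fun s => proj1 (HP s))) (tower_periodic D2 L H2 (fun s => proj2 (HP s))).
  generalize (tower_cont D1 H1) (tower_cont D2 H2). intros C1 C2 Q1 Q2.
  eapply Un_cv_eq. apply CV_plus.
  - apply (parseval L (fun s => D1 2%nat s + a * D2 1%nat s) (fun s => D1 3%nat s + a * D2 2%nat s)); auto.
    intro; apply dpl_lin; auto. intro; cont. intro t; rewrite !Q1, Q2; auto.
  - apply (parseval L (fun s => D2 2%nat s - a * D1 1%nat s) (fun s => D2 3%nat s - a * D1 2%nat s)); auto.
    intro; apply dpl_lin'; auto. intro; cont. intro t; rewrite !Q2, Q1; auto.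
  - rewrite <- Rmult_plus_distr_l. f_equal. rewrite <- RInt_plusR by (intro; cont).
    apply RInt_extR. intro s. rewrite <- (Xp_pt D1 D2 L a s Hc). ring.
  - reflexivity.
Qed.

Lemma parseval_d D1 D2 L : arclength_closed_curve D1 D2 L ->
  Un_cv (fun N => Qs L (D1 1%nat) N + Qs L (D2 1%nat) N) (L * L).
Proof.
  intros Hc. generalize Hc. intros [HL [H1 [H2 [HP HU]]]].
  generalize (tower_periodic D1 L H1 (fun s => proj1 (HP s))) (tower_periodic D2 L H2 (fun s => proj2 (HP s))).
  generalize (tower_cont D1 H1) (tower_cont D2 H2). intros C1 C2 Q1 Q2.
  eapply Un_cv_eq. apply CV_plus.
  - apply (parseval L (D1 1%nat) (D1 2%nat)); auto.
  - apply (parseval L (D2 1%nat) (D2 2%nat)); auto.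
  - rewrite <- Rmult_plus_distr_l. f_equal. rewrite <- RInt_plusR by (intro; cont).
    rewrite (RInt_extR _ (fun _ => 1)). rewrite RInt_constR. ring. intro s. rewrite <- (HU s). ring.
  - reflexivity.
Qed.


Lemma cv_const c : Un_cv (fun _ => c) c.
Proof. intros eps He. exists O. intros. unfold R_dist. rewrite Rminus_diag, Rabs_R0. auto. Qed.

Lemma target2 D1 D2 L n : arclength_closed_curve D1 D2 L -> rotation_number D1 D2 L = IZR n ->
  Un_cv (fun N => 16 * PI^4 / L^3 *
           sumZ_partial (fun k => (IZR k)^2 * (IZR k - IZR n)^2
                                  * fhat_norm2 (D1 0%nat) (D2 0%nat) L k) N)
        (I0 D1 D2 L).
Proof.
  intros Hc Hr. eapply Un_cv_eq. apply (parseval_p D1 D2 L (2 * PI * IZR n / L) Hc).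
  - symmetry. apply I0_eq; auto.
  - intro N. generalize Hc. intros [HL [H1 [H2 [HP HU]]]].
    generalize (tower_cont D1 H1) (tower_cont D2 H2). intros C1 C2.
    rewrite sumZ_sym, <- symZ_scal, <- Qs_sym by (intro; cont).
    apply symZ_ext. intro z. rewrite X_p, fhat_X; auto; try (intro s; apply HP).
    field. lra.
Qed.

Lemma target1 D1 D2 L n : arclength_closed_curve D1 D2 L -> rotation_number D1 D2 L = IZR n ->
  Un_cv (fun N => 16 * PI^4 / L^3 *
           sumZ_partial (fun k => (IZR k)^3 * (IZR k - IZR n)
                                  * fhat_norm2 (D1 0%nat) (D2 0%nat) L k) N)
        (I0 D1 D2 L).
Proof.
  intros Hc Hr. set (w := 2 * PI * IZR n / L).
  eapply Un_cv_eq. apply CV_plus. apply (parseval_p D1 D2 L (w / 2) Hc).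
  apply CV_mult. apply (cv_const (- (w/2)^2)). apply (parseval_d D1 D2 L Hc).
  - rewrite (I0_eq D1 D2 L n) by auto. fold w. generalize (int_kappa D1 D2 L n Hc Hr). intro Ek.
    generalize Hc. intros [HL [H1 [H2 [HP HU]]]].
    generalize (tower_cont D1 H1) (tower_cont D2 H2). intros C1 C2.
    assert (Hk : contR (curvature D1 D2)) by (intro; unfold curvature; cont).
    rewrite (RInt_extR (fun s => (curvature D1 D2 s - w / 2)^2)
       (fun s => ((curvature D1 D2 s - w)^2 + w * curvature D1 D2 s) - 3/4 * w^2)) by (intro; field).
    rewrite RInt_minusR, RInt_plusR, RInt_scalR, RInt_constR, Ek by (intro; cont).
    unfold w. field. lra.
  - intro N. generalize Hc. intros [HL [H1 [H2 [HP HU]]]].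
    generalize (tower_cont D1 H1) (tower_cont D2 H2). intros C1 C2.
    rewrite sumZ_sym, <- symZ_scal, <- !Qs_sym by (intro; cont).
    rewrite <- symZ_scal, <- symZ_plus.
    apply symZ_ext. intro z. rewrite X_p, X_d1, fhat_X; auto; try (intro s; apply HP).
    unfold w. field. lra.
Qed.

Lemma I0_nonneg D1 D2 L n : arclength_closed_curve D1 D2 L -> rotation_number D1 D2 L = IZR n ->
  0 <= I0 D1 D2 L.
Proof.
  intros Hc Hr. rewrite (I0_eq D1 D2 L n) by auto. generalize Hc. intros [HL [H1 [H2 [HP HU]]]].
  generalize (tower_cont D1 H1) (tower_cont D2 H2). intros C1 C2.
  apply Rmult_le_pos; [lra|]. apply RInt_ge0; [lra| intro; unfold curvature; cont |].
  intros; apply pow2_ge_0.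
Qed.


Lemma cont_nbhd (g : R -> R) x0 e : continuous g x0 -> 0 < e ->
  exists alp, 0 < alp /\ forall y, Rabs (y - x0) < alp -> Rabs (g y - g x0) < e.
Proof.
  intros Hg He. apply cont_pt in Hg. destruct (Hg e He) as [alp [Ha H]].
  exists alp. split; auto. intros y Hy.
  destruct (Req_dec y x0) as [->|Hne]. rewrite Rminus_diag, Rabs_R0; auto.
  apply H. split. split; [exact I| auto]. exact Hy.
Qed.

Lemma zero_int (g : R -> R) L : 0 < L -> contR g -> (forall x, 0 <= x <= L -> 0 <= g x) ->
  RInt g 0 L = 0 -> forall x, 0 <= x <= L -> g x = 0.
Proof.
  intros HL Hg Hpos Hint x0 Hx0.
  destruct (Rle_lt_or_eq_dec 0 (g x0) (Hpos x0 Hx0)) as [Hlt|Heq]; [|auto].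
  exfalso.
  destruct (cont_nbhd g x0 (g x0 / 2) (Hg x0) ltac:(lra)) as [alp [Ha Hal]].
  set (a := Rmax 0 (x0 - alp/2)). set (b := Rmin L (x0 + alp/2)).
  assert (Hab : a < b). { unfold a, b. apply Rmax_lub_lt; apply Rmin_glb_lt; lra. }
  assert (Ha0 : 0 <= a) by apply Rmax_l. assert (HbL : b <= L) by apply Rmin_l.
  assert (Ha1 : x0 - alp/2 <= a) by apply Rmax_r. assert (Hb1 : b <= x0 + alp/2) by apply Rmin_r.
  assert (I1 : 0 <= RInt g 0 a) by (apply RInt_ge0; auto; intros; apply Hpos; lra).
  assert (I3 : 0 <= RInt g b L) by (apply RInt_ge0; auto; intros; apply Hpos; lra).
  assert (I2 : 0 < RInt g a b).
  { apply RInt_gt_0; auto. intros y Hy. assert (Rabs (y - x0) < alp) by (apply Rabs_def1; lra).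
    generalize (Hal y H). intro Hh. apply Rabs_def2 in Hh. lra. all: try (intros; apply Hg). }
  assert (E : RInt g 0 L =R RInt g 0 a + RInt g a b + RInt g b L).
  { rewrite <- (RInt_Chasles (V:=R_CompleteNormedModule) g 0 a L) by (apply exR; auto).
    rewrite <- (RInt_Chasles (V:=R_CompleteNormedModule) g a b L) by (apply exR; auto).
    change plus with Rplus. ring. }
  lra.
Qed.

Lemma per_nat (h : R -> R) L : (forall t, h (t + L) = h t) -> forall (k : nat) t, h (t + INR k * L) = h t.
Proof. intros H k. induction k; intro t. simpl. f_equal; ring.
  rewrite S_INR. replace (t + (INR k + 1) * L) with ((t + INR k * L) + L) by ring. rewrite H. auto. Qed.

Lemma per_reduce (L : R) s : 0 < L -> exists t, 0 <= t <= L /\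
  forall h : R -> R, (forall t, h (t + L) = h t) -> h s = h t.
Proof.
  intros HL. destruct (archimed (s / L)) as [H1 H2].
  set (z := (up (s / L) - 1)%Z).
  assert (Hz : IZR z <= s / L < IZR z + 1) by (unfold z; rewrite minus_IZR; simpl; lra).
  exists (s - IZR z * L). split.
  - assert (IZR z * L <= s /\ s < (IZR z + 1) * L).
    { split; apply Rmult_le_reg_r with (/ L) || apply Rmult_lt_reg_r with (/ L);
      try (apply Rinv_0_lt_compat; lra); field_simplify; try lra; unfold Rdiv in Hz; lra. }
    lra.
  - intros h Hh. destruct (Z_le_gt_dec 0 z) as [Hz0|Hz0].
    + rewrite <- (per_nat h L Hh (Z.to_nat z) (s - IZR z * L)). rewrite INR_IZR_INZ, Z2Nat.id by lia. f_equal; ring.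
    + replace (s - IZR z * L) with (s + INR (Z.to_nat (- z)) * L). rewrite per_nat; auto.
      rewrite INR_IZR_INZ, Z2Nat.id, opp_IZR by lia. ring.
Qed.

Lemma const_deriv0 (g : R -> R) : (forall x, derivable_pt_lim g x 0) -> forall s, g s = g 0.
Proof.
  intros H s. destruct (MVT_abs g (fun _ => 0) 0 s) as [c [Hc _]]. intros; apply H.
  rewrite Rabs_R0, Rmult_0_l in Hc. apply Rabs_eq_0 in Hc. lra.
Qed.

Lemma dpl_mult (f g : R -> R) x df dg : derivable_pt_lim f x df -> derivable_pt_lim g x dg ->
  derivable_pt_lim (fun s => f s * g s) x (df * g x + f x * dg).
Proof. intros. apply (dpl_ext (f * g)%F). intro; reflexivity. apply derivable_pt_lim_mult; auto. Qed.
Lemma dpl_plus (f g : R -> R) x df dg : derivable_pt_lim f x df -> derivable_pt_lim g x dg ->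
  derivable_pt_lim (fun s => f s + g s) x (df + dg).
Proof. intros. apply (dpl_ext (f + g)%F). intro; reflexivity. apply derivable_pt_lim_plus; auto. Qed.
Lemma dpl_const c x : derivable_pt_lim (fun _ => c) x 0.
Proof. apply derivable_pt_lim_const. Qed.
Lemma dpl_subc (f : R -> R) c x df : derivable_pt_lim f x df -> derivable_pt_lim (fun s => f s - c) x df.
Proof. intros. apply (dpl_ext (fun s => f s + (-c))). intro; ring. rewrite <- Rplus_0_r. apply dpl_plus; auto. apply dpl_const. Qed.

Lemma tangent_eq D1 D2 L s : arclength_closed_curve D1 D2 L ->
  D1 2%nat s = - curvature D1 D2 s * D2 1%nat s /\ D2 2%nat s = curvature D1 D2 s * D1 1%nat s.
Proof.
  intros Hc. generalize (unit_deriv D1 D2 L Hc s). destruct Hc as [HL [H1 [H2 [HP HU]]]]. intro E.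
  generalize (HU s). intro U. unfold curvature.
  set (u := D1 1%nat s) in *. set (v := D2 1%nat s) in *. set (a := D1 2%nat s) in *. set (b := D2 2%nat s) in *.
  split.
  - transitivity (a * (u^2 + v^2) - u * (u * a + v * b)).
    rewrite U, E; ring. ring.
  - transitivity (b * (u^2 + v^2) - v * (u * a + v * b)).
    rewrite U, E; ring. ring.
Qed.


Lemma angle_exists a b : a^2 + b^2 = 1 -> exists t, cos t = a /\ sin t = b.
Proof.
  intros H. assert (Ha : -1 <= a <= 1) by nra.
  assert (Hs : sqrt (1 - a²) = Rabs b).
  { rewrite <- sqrt_Rsqr_abs. f_equal. unfold Rsqr. nra. }
  destruct (Rle_dec 0 b) as [Hb|Hb].
  - exists (acos a). rewrite cos_acos, sin_acos, Hs, Rabs_pos_eq; auto.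
  - exists (- acos a). rewrite cos_neg, sin_neg, cos_acos, sin_acos, Hs, Rabs_left; auto; lra.
Qed.

Lemma sq0 x : x ^ 2 = 0 -> x = 0.
Proof. intro H. nra. Qed.

Lemma dpl_cos w t0 x : derivable_pt_lim (fun s => cos (w * s + t0)) x (- sin (w * x + t0) * w).
Proof. apply is_derive_Reals. auto_derive; auto. toR. ring. Qed.
Lemma dpl_sin w t0 x : derivable_pt_lim (fun s => sin (w * s + t0)) x (cos (w * x + t0) * w).
Proof. apply is_derive_Reals. auto_derive; auto. toR. ring. Qed.

Lemma curv_per D1 D2 L : arclength_closed_curve D1 D2 L -> forall t, curvature D1 D2 (t + L) = curvature D1 D2 t.
Proof.
  intros [HL [H1 [H2 [HP HU]]]] t.
  generalize (tower_periodic D1 L H1 (fun s => proj1 (HP s))) (tower_periodic D2 L H2 (fun s => proj2 (HP s))).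
  intros Q1 Q2. unfold curvature. rewrite !Q1, !Q2. reflexivity.
Qed.

Lemma forward D1 D2 L n : arclength_closed_curve D1 D2 L -> rotation_number D1 D2 L = IZR n -> (1 <= n)%Z ->
  I0 D1 D2 L = 0 -> image_is_nfold_circle (D1 0%nat) (D2 0%nat) L n.
Proof.
  intros Hc Hr Hn H0.
  rewrite (I0_eq D1 D2 L n Hc Hr) in H0.
  generalize Hc. intros [HL [H1 [H2 [HP HU]]]].
  generalize (tower_cont D1 H1) (tower_cont D2 H2). intros C1 C2.
  set (w := 2 * PI * IZR n / L) in *.
  assert (Hw : 0 < w).
  { unfold w. apply IZR_le in Hn. generalize PI_RGT_0. intro. apply Rdiv_lt_0_compat; auto. nra. }
  assert (Hk : forall s, curvature D1 D2 s = w).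
  { intro s. destruct (per_reduce L s HL) as [t [Ht Hred]].
    rewrite (Hred (curvature D1 D2) (curv_per D1 D2 L Hc)).
    assert (Z : (fun s => (curvature D1 D2 s - w)^2) t = 0).
    { apply (zero_int (fun s => (curvature D1 D2 s - w)^2) L HL); auto.
      intro; unfold curvature; cont. intros; apply pow2_ge_0.
      apply Rmult_integral in H0. destruct H0; [lra|auto]. }
    simpl in Z. nra. }
  assert (T1 : forall s, D1 2%nat s = - w * D2 1%nat s) by (intro s; rewrite <- (Hk s); apply (tangent_eq D1 D2 L s Hc)).
  assert (T2 : forall s, D2 2%nat s = w * D1 1%nat s) by (intro s; rewrite <- (Hk s); apply (tangent_eq D1 D2 L s Hc)).
  destruct (angle_exists (D1 1%nat 0) (D2 1%nat 0) (HU 0)) as [t0 [Ht1 Ht2]].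
  set (phi := fun s => D1 1%nat s * cos (w * s + t0) + D2 1%nat s * sin (w * s + t0)).
  assert (Hphi : forall s, phi s = phi 0).
  { apply const_deriv0. intro x. unfold phi.
    eapply (dpl_ext _ _ x). intro; reflexivity.
    replace 0 with ((D1 2%nat x * cos (w * x + t0) + D1 1%nat x * (- sin (w * x + t0) * w)) +
                    (D2 2%nat x * sin (w * x + t0) + D2 1%nat x * (cos (w * x + t0) * w)))
      by (rewrite T1, T2; ring).
    apply dpl_plus; [apply (dpl_mult (D1 1%nat) (fun s => cos (w * s + t0))) | apply (dpl_mult (D2 1%nat) (fun s => sin (w * s + t0)))];
      auto using dpl_cos, dpl_sin. }
  assert (Hphi0 : phi 0 = 1).
  { unfold phi. rewrite Rmult_0_r, Rplus_0_l, Ht1, Ht2. rewrite <- (HU 0). ring. }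
  assert (Tan : forall s, D1 1%nat s = cos (w * s + t0) /\ D2 1%nat s = sin (w * s + t0)).
  { intro s. generalize (Hphi s) (HU s) (sin2_cos2 (w * s + t0)). rewrite Hphi0. unfold phi, Rsqr. intros A B C.
    assert (Z : (D1 1%nat s - cos (w * s + t0))^2 + (D2 1%nat s - sin (w * s + t0))^2 = 0) by nra.
    generalize (pow2_ge_0 (D1 1%nat s - cos (w * s + t0))) (pow2_ge_0 (D2 1%nat s - sin (w * s + t0))). intros G1 G2.
    split; apply Rminus_diag_uniq; apply sq0; lra. }
  set (F1 := fun s => D1 0%nat s - sin (w * s + t0) / w).
  set (F2 := fun s => D2 0%nat s + cos (w * s + t0) / w).
  assert (HF1 : forall s, F1 s = F1 0).
  { apply const_deriv0. intro x. unfold F1.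
    apply (dpl_ext (fun s => D1 0%nat s + (- / w) * sin (w * s + t0))). intro; unfold Rdiv; ring.
    replace 0 with (D1 1%nat x + (- / w) * (cos (w * x + t0) * w)) by (rewrite (proj1 (Tan x)); field; lra).
    apply (dpl_lin (D1 0%nat) (fun s => sin (w * s + t0))); auto using dpl_sin. }
  assert (HF2 : forall s, F2 s = F2 0).
  { apply const_deriv0. intro x. unfold F2.
    apply (dpl_ext (fun s => D2 0%nat s + (/ w) * cos (w * s + t0))). intro; unfold Rdiv; ring.
    replace 0 with (D2 1%nat x + (/ w) * (- sin (w * x + t0) * w)) by (rewrite (proj2 (Tan x)); field; lra).
    apply (dpl_lin (D2 0%nat) (fun s => cos (w * s + t0))); auto using dpl_cos. }
  exists (F1 0), (F2 0), (/ w), ((t0 - PI/2) / w). split; [apply Rinv_0_lt_compat; auto|].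
  assert (Harg : forall s, 2 * PI * IZR n * (s + (t0 - PI/2) / w) / L = (w * s + t0) - PI/2).
  { intro s. unfold w. apply IZR_le in Hn. generalize PI_RGT_0. intro. field. split; lra. }
  assert (E1 : forall s, D1 0%nat s = F1 0 + / w * cos (2 * PI * IZR n * (s + (t0 - PI/2) / w) / L)).
  { intro s. rewrite Harg, <- (HF1 s). unfold F1.
    replace (w * s + t0 - PI/2) with (- (PI/2 - (w * s + t0))) by ring. rewrite cos_neg, cos_shift. field. lra. }
  assert (E2 : forall s, D2 0%nat s = F2 0 + / w * sin (2 * PI * IZR n * (s + (t0 - PI/2) / w) / L)).
  { intro s. rewrite Harg, <- (HF2 s). unfold F2.
    replace (w * s + t0 - PI/2) with (- (PI/2 - (w * s + t0))) by ring. rewrite sin_neg, sin_shift. field. lra. }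
  intros x y. split.
  - intros [s [Hx Hy]]. exists s. rewrite <- E1, <- E2. auto.
  - intros [s [Hx Hy]]. exists s. rewrite E1, E2. auto.
Qed.


Lemma RInt_ext_in (f g : R -> R) L : 0 < L -> (forall x, 0 <= x <= L -> f x = g x) -> RInt f 0 L =R RInt g 0 L.
Proof. intros HL H. apply RInt_ext. intros x Hx. rewrite Rmin_left, Rmax_right in Hx by lra. apply H; lra. Qed.

Lemma backward D1 D2 L n : arclength_closed_curve D1 D2 L -> rotation_number D1 D2 L = IZR n ->
  image_is_nfold_circle (D1 0%nat) (D2 0%nat) L n -> I0 D1 D2 L = 0.
Proof.
  intros Hc Hr [c1 [c2 [r [sg [Hr0 Himg]]]]].
  generalize Hc. intros [HL [H1 [H2 [HP HU]]]].
  generalize (tower_cont D1 H1) (tower_cont D2 H2). intros C1 C2.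
  set (X := fun s => D1 0%nat s - c1). set (Y := fun s => D2 0%nat s - c2).
  assert (Hcirc : forall s, X s * X s + Y s * Y s = r^2).
  { intro s. destruct (proj1 (Himg (D1 0%nat s) (D2 0%nat s)) (ex_intro _ s (conj eq_refl eq_refl))) as [s' [E1 E2]].
    unfold X, Y. rewrite <- E1, <- E2.
    generalize (sin2_cos2 (2 * PI * IZR n * (s' + sg) / L)). unfold Rsqr. intro. nra. }
  set (h := fun s => X s * D1 1%nat s + Y s * D2 1%nat s).
  assert (Hh : forall s, h s = 0).
  { intro x.
    assert (A : derivable_pt_lim (fun s => X s * X s + Y s * Y s) x
                 ((D1 1%nat x * X x + X x * D1 1%nat x) + (D2 1%nat x * Y x + Y x * D2 1%nat x))).
    { apply dpl_plus; apply dpl_mult; apply dpl_subc; apply H1 || apply H2. }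
    assert (B : derivable_pt_lim (fun s => X s * X s + Y s * Y s) x 0).
    { apply (dpl_ext (fun _ => r^2)). intro; rewrite Hcirc; auto. apply dpl_const. }
    generalize (uniqueness_limite _ _ _ _ A B). unfold h. lra. }
  assert (Hh2 : forall s, X s * D1 2%nat s + Y s * D2 2%nat s = -1).
  { intro x.
    assert (A : derivable_pt_lim h x
                 ((D1 1%nat x * D1 1%nat x + X x * D1 2%nat x) + (D2 1%nat x * D2 1%nat x + Y x * D2 2%nat x))).
    { unfold h. apply dpl_plus; apply dpl_mult; try apply dpl_subc; apply H1 || apply H2. }
    assert (B : derivable_pt_lim h x 0).
    { apply (dpl_ext (fun _ => 0)). intro; rewrite Hh; auto. apply dpl_const. }
    generalize (uniqueness_limite _ _ _ _ A B) (HU x). intros. nra. }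
  set (W := fun s => - X s * D2 1%nat s + Y s * D1 1%nat s).
  assert (HkW : forall s, curvature D1 D2 s * W s = -1).
  { intro s. destruct (tangent_eq D1 D2 L s Hc) as [T1 T2]. rewrite <- (Hh2 s), T1, T2. unfold W. ring. }
  assert (HW2 : forall s, W s * W s = r^2).
  { intro s. rewrite <- (Hcirc s). generalize (Hh s) (HU s). unfold W, h. intros A B.
    transitivity ((X s * X s + Y s * Y s) * (D1 1%nat s ^ 2 + D2 1%nat s ^ 2) - (X s * D1 1%nat s + Y s * D2 1%nat s)^2).
    ring. rewrite A, B. ring. }
  assert (HWc : continuity W).
  { intro x. apply cont_pt. unfold W, X, Y. cont. }
  assert (HWc0 : forall s, 0 <= s <= L -> W s = W 0).
  { intros s Hs. destruct (Req_dec (W s) (W 0)) as [E|E]; auto. exfalso.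
    assert (E' : W s = - W 0).
    { generalize (HW2 s) (HW2 0). intros A B. assert ((W s - W 0) * (W s + W 0) = 0) by nra.
      apply Rmult_integral in H. destruct H; lra. }
    destruct (IVT_cor W 0 s HWc ltac:(lra)) as [z [Hz Wz]].
    { rewrite E'. generalize (HW2 0); nra. }
    generalize (HW2 z). rewrite Wz. nra. }
  set (K := - / W 0).
  assert (HW0 : W 0 <> 0) by (intro E; generalize (HW2 0); rewrite E; nra).
  assert (HK : forall s, 0 <= s <= L -> curvature D1 D2 s = K).
  { intros s Hs. generalize (HkW s). rewrite HWc0 by auto. intro E. unfold K. field_simplify; auto.
    apply Rmult_eq_reg_r with (W 0); auto. rewrite E. field. auto. }
  generalize (int_kappa D1 D2 L n Hc Hr). rewrite (RInt_ext_in _ (fun _ => K) L HL HK), RInt_constR. intro EK.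
  rewrite (I0_eq D1 D2 L n Hc Hr).
  rewrite (RInt_ext_in _ (fun _ => 0) L HL). rewrite RInt_constR. ring.
  intros s Hs. rewrite HK by auto. replace K with (2 * PI * IZR n / L). unfold Rminus. rewrite Rplus_opp_r. ring.
  apply Rmult_eq_reg_r with L; [|lra]. rewrite Rmult_minus_distr_r in EK. field_simplify; [|lra]. lra.
Qed.


Theorem mainTheorem2 (D1 D2 : nat -> R -> R) (L : R) (n : Z)
  (Hcurve : arclength_closed_curve D1 D2 L)
  (Hrot : rotation_number D1 D2 L = IZR n)
  (Hn : (1 <= n)%Z) :
  Un_cv (fun N => 16 * PI^4 / L^3 *
           sumZ_partial (fun k => (IZR k)^3 * (IZR k - IZR n)
                                  * fhat_norm2 (D1 0%nat) (D2 0%nat) L k) N)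
        (I0 D1 D2 L) /\
  Un_cv (fun N => 16 * PI^4 / L^3 *
           sumZ_partial (fun k => (IZR k)^2 * (IZR k - IZR n)^2
                                  * fhat_norm2 (D1 0%nat) (D2 0%nat) L k) N)
        (I0 D1 D2 L) /\
  0 <= I0 D1 D2 L /\
  (I0 D1 D2 L = 0 <-> image_is_nfold_circle (D1 0%nat) (D2 0%nat) L n).
Proof.
  split; [apply (target1 D1 D2 L n); auto|].
  split; [apply (target2 D1 D2 L n); auto|].
  split; [apply (I0_nonneg D1 D2 L n); auto|].
  split; [apply (forward D1 D2 L n); auto | apply (backward D1 D2 L n); auto].
Qed.
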